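(* Let $0<m<1$, $\mu>0$, let $f:\mathbb{R}\to\mathbb{R}$ be smooth, and let $u_->u_+=0$. For $s\in\mathbb{R}$ put $g(u)=-s(u-u_-)+f(u)-f(u_-)$. (1) (Necessary condition.) If the equation $u_t+f(u)_x=\mu (u^m)_{xx}$ admits a monotonically decreasing shock profile $u(x,t)=U(x-st)$ connecting $u_-$ and $u_+$, i.e. $U$ is monotonically decreasing, solves $-sU_\xi+f(U)_\xi=\mu (U^m)_{\xi\xi}$ and satisfies $U(\xi)\to u_\pm$ as $\xi\to\pm\infty$, then $u_\pm$ and $s$ satisfy the Rankine–Hugoniot condition $$s=\frac{f(u_+)-f(u_-)}{u_+-u_-}$$ and the generalized shock condition $g(u)<0$ for all $u\in(u_+,u_-)$. (2) (Sufficient condition.) If $s$ satisfies the Rankine–Hugoniot condition above and $g(u)<0$ for all $u\in(u_+,u_-)$, then there exists a monotonically decreasing solution $U(\xi)$ of $-sU_\xi+f(U)_\xi=\mu (U^m)_{\xi\xi}$ with $U(\pm\infty)=u_\pm$, and it is unique up to a shift in $\xi$. (3) (Decay properties.) In the non-degenerate case $f'(u_+)<s<f'(u_-)$ this profile satisfies $$|U_\xi|^{\frac{1}{2-m}}\sim |U(\xi)-u_+|\sim |\xi|^{-\frac{1}{1-m}}\ \text{ as }\xi\to+\infty,\qquad |U_\xi|\sim |U(\xi)-u_-|\sim e^{-\lambda|\xi|}\ \text{ as }\xi\to-\infty,$$ where $\lambda:=\frac{u_-^{1-m}}{\mu m}\big(f'(u_-)-s\big)>0$. In the degenerate case $f'(u_+)=s<f'(u_-)$,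 assuming moreover that $f''(u_+)=\cdots=f^{(k_+)}(u_+)=0$ and $f^{(k_++1)}(u_+)\neq 0$ for some integer $k_+\ge 1$, it satisfies $$|U_\xi|^{\frac{1}{k_++2-m}}\sim |U(\xi)-u_+|\sim |\xi|^{-\frac{1}{k_++1-m}}\ \text{ as }\xi\to+\infty,\qquad |U_\xi|\sim |U(\xi)-u_-|\sim e^{-\lambda|\xi|}\ \text{ as }\xi\to-\infty,$$ with the same $\lambda$.
   Context: For positive functions, $a(\xi)\sim b(\xi)$ as $\xi\to\xi_0$ means there is a constant $C\ge 1$ with $C^{-1}b\le a\le Cb$ in a neighborhood of $\xi_0$. Note that under the Rankine–Hugoniot condition $g(u)$ also equals $-s(u-u_+)+f(u)-f(u_+)$. *)

(* Defs.v *)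
From Stdlib Require Import Reals.
From Coquelicot Require Export Coquelicot.
Open Scope R_scope.

(* x ^ a for real exponent a > 0, with the convention 0 ^ a = 0
   (Stdlib's Rpower 0 a would be exp (a * ln 0) = 1, which is wrong). *)
Definition rpow (x a : R) : R := if Rlt_dec 0 x then Rpower x a else 0.

Definition smooth (f : R -> R) : Prop := forall (n : nat) (x : R), ex_derive_n f n x.

Definition gfun (f : R -> R) (s um u : R) : R := - s * (u - um) + f u - f um.

Definition is_profile (f : R -> R) (mu m s um : R) (U : R -> R) : Prop :=
  (forall x y, x <= y -> U y <= U x) /\
  is_lim U m_infty (Finite um) /\
  is_lim U p_infty (Finite 0) /\
  (forall xi,
     ex_derive U xi /\
     ex_derive (fun x => rpow (U x) m) xi /\
     ex_derive (Derive (fun x => rpow (U x) m)) xi /\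
     - s * Derive U xi + Derive (fun x => f (U x)) xi
       = mu * Derive (Derive (fun x => rpow (U x) m)) xi).

Definition equiv_pinfty (a b : R -> R) : Prop :=
  exists C X : R, 1 <= C /\
    forall x, X < x -> b x / C <= a x /\ a x <= C * b x.

Definition equiv_minfty (a b : R -> R) : Prop :=
  exists C X : R, 1 <= C /\
    forall x, x < X -> b x / C <= a x /\ a x <= C * b x.

(* Main.v *)
Require Import Defs.
From Stdlib Require Import Reals Lra Lia Ranalysis5 ClassicalEpsilon.
From Coquelicot Require Import Coquelicot.
Open Scope R_scope.

Lemma cont_of_derive (F : R -> R) x d : is_derive F x d -> continuity_pt F x.
Proof.
  intros H. apply is_derive_Reals in H. apply derivable_continuous_pt. exists d. exact H.
Qed.

Lemma incr_on (F dF : R -> R) a b : a <= b ->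
  (forall x, a <= x <= b -> is_derive F x (dF x)) ->
  (forall x, a <= x <= b -> 0 <= dF x) -> F a <= F b.
Proof.
  intros Hab HD Hp.
  destruct (MVT_gen F a b dF) as [c [Hc He]].
  - intros x Hx. apply HD. rewrite Rmin_left in Hx by lra. rewrite Rmax_right in Hx by lra. lra.
  - intros x Hx. rewrite Rmin_left in Hx by lra. rewrite Rmax_right in Hx by lra.
    eapply cont_of_derive. apply HD. lra.
  - rewrite Rmin_left in Hc by lra. rewrite Rmax_right in Hc by lra.
    assert (0 <= dF c * (b - a)) by (apply Rmult_le_pos; [apply Hp; lra| lra]). lra.
Qed.

Lemma decr_on (F dF : R -> R) a b : a <= b ->
  (forall x, a <= x <= b -> is_derive F x (dF x)) ->
  (forall x, a <= x <= b -> dF x <= 0) -> F b <= F a.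
Proof.
  intros Hab HD Hp.
  assert (- F a <= - F b); [|lra].
  apply (incr_on (fun x => - F x) (fun x => - dF x)); auto.
  - intros x Hx. apply (is_derive_opp F). apply HD; auto.
  - intros x Hx. specialize (Hp x Hx). lra.
Qed.

Lemma strict_decr_on (F dF : R -> R) a b : a < b ->
  (forall x, a <= x <= b -> is_derive F x (dF x)) ->
  (forall x, a <= x <= b -> dF x < 0) -> F b < F a.
Proof.
  intros Hab HD Hp.
  destruct (MVT_gen F a b dF) as [c [Hc He]].
  - intros x Hx. apply HD. rewrite Rmin_left in Hx by lra. rewrite Rmax_right in Hx by lra. lra.
  - intros x Hx. rewrite Rmin_left in Hx by lra. rewrite Rmax_right in Hx by lra.
    eapply cont_of_derive. apply HD. lra.
  - rewrite Rmin_left in Hc by lra. rewrite Rmax_right in Hc by lra.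
    assert (dF c * (b - a) < 0).
    { assert (0 < - dF c * (b - a)) by (apply Rmult_lt_0_compat; [specialize (Hp c Hc); lra| lra]). lra. }
    lra.
Qed.

Lemma const_deriv (F : R -> R) : (forall x, is_derive F x 0) -> forall x y, F x = F y.
Proof.
  intros HD.
  assert (H : forall x y, x <= y -> F x = F y).
  { intros x y Hxy. apply Rle_antisym.
    - apply (incr_on F (fun _ => 0)); auto; intros; lra.
    - apply (decr_on F (fun _ => 0)); auto; intros; lra. }
  intros x y. destruct (Rle_lt_dec x y). auto. symmetry. apply H. lra.
Qed.

Lemma deriv_loc_bound (F : R -> R) x0 d : is_derive F x0 d ->
  exists del, 0 < del /\ forall v, Rabs (v - x0) < del ->
    Rabs (F v - F x0) <= (Rabs d + 1) * Rabs (v - x0).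
Proof.
  intros HD. apply is_derive_Reals in HD.
  destruct (HD 1 Rlt_0_1) as [del Hdel].
  exists del. split. apply cond_pos.
  intros v Hv. destruct (Req_dec v x0) as [->|Hne].
  - replace (x0 - x0) with 0 by ring. replace (F x0 - F x0) with 0 by ring. rewrite Rabs_R0. lra.
  - specialize (Hdel (v - x0)). replace (x0 + (v - x0)) with v in Hdel by ring.
    assert (Hh : v - x0 <> 0) by lra. specialize (Hdel Hh Hv).
    assert (Hpos : 0 < Rabs (v - x0)) by (apply Rabs_pos_lt; auto).
    replace (F v - F x0) with (((F v - F x0) / (v - x0) - d) * (v - x0) + d * (v - x0)) by (field; auto).
    eapply Rle_trans. apply Rabs_triang. rewrite !Rabs_mult.
    assert (Rabs ((F v - F x0) / (v - x0) - d) * Rabs (v - x0) <= 1 * Rabs (v - x0)).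
    { apply Rmult_le_compat_r; lra. }
    lra.
Qed.

Lemma lim_minf_elim (f : R -> R) l : is_lim f m_infty (Finite l) ->
  forall eps, 0 < eps -> exists M, forall x, x < M -> Rabs (f x - l) < eps.
Proof.
  intros H eps Heps. apply is_lim_spec in H. exact (H (mkposreal eps Heps)).
Qed.

Lemma lim_pinf_elim (f : R -> R) l : is_lim f p_infty (Finite l) ->
  forall eps, 0 < eps -> exists M, forall x, M < x -> Rabs (f x - l) < eps.
Proof.
  intros H eps Heps. apply is_lim_spec in H. exact (H (mkposreal eps Heps)).
Qed.

Lemma lim_minf_intro (f : R -> R) l :
  (forall eps, 0 < eps -> exists M, forall x, x < M -> Rabs (f x - l) < eps) ->
  is_lim f m_infty (Finite l).
Proof.
  intros H. apply is_lim_spec. intros eps. apply (H eps (cond_pos eps)).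
Qed.

Lemma lim_pinf_intro (f : R -> R) l :
  (forall eps, 0 < eps -> exists M, forall x, M < x -> Rabs (f x - l) < eps) ->
  is_lim f p_infty (Finite l).
Proof.
  intros H. apply is_lim_spec. intros eps. apply (H eps (cond_pos eps)).
Qed.

Lemma rpow_pos_eq x a : 0 < x -> rpow x a = Rpower x a.
Proof. intros H. unfold rpow. destruct (Rlt_dec 0 x); [auto|lra]. Qed.

Lemma rpow_gt0 x a : 0 < x -> 0 < rpow x a.
Proof. intros H. rewrite rpow_pos_eq by auto. unfold Rpower. apply exp_pos. Qed.

Lemma rpow_ge0 x a : 0 <= rpow x a.
Proof. unfold rpow. destruct (Rlt_dec 0 x). unfold Rpower. left; apply exp_pos. lra. Qed.

Lemma rpow_le_base x y a : 0 <= x <= y -> 0 <= a -> rpow x a <= rpow y a.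
Proof.
  intros Hxy Ha. destruct (Req_dec x 0) as [->|Hx].
  - unfold rpow at 1. destruct (Rlt_dec 0 0). lra. apply rpow_ge0.
  - rewrite !rpow_pos_eq by lra. apply Rle_Rpower_l; lra.
Qed.

Lemma exp_mono x y : x <= y -> exp x <= exp y.
Proof. intros [H|H]. left; apply exp_increasing; auto. subst; lra. Qed.

Lemma ln_mono x y : 0 < x -> x <= y -> ln x <= ln y.
Proof. intros Hx [H|H]. left; apply ln_increasing; auto. subst; lra. Qed.

Lemma rpow_bound x a : 0 <= x -> 0 < a <= 1 -> rpow x a <= 1 + x.
Proof.
  intros Hx Ha. destruct (Req_dec x 0) as [->|Hx0].
  - unfold rpow. destruct (Rlt_dec 0 0). lra. lra.
  - rewrite rpow_pos_eq by lra. unfold Rpower.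
    destruct (Rle_lt_dec x 1).
    + assert (ln x <= 0). { rewrite <- ln_1. apply ln_mono; lra. }
      assert (exp (a * ln x) <= exp 0). { apply exp_mono. nra. } rewrite exp_0 in H0. lra.
    + assert (0 <= ln x). { rewrite <- ln_1. apply ln_mono; lra. }
      assert (exp (a * ln x) <= exp (ln x)). { apply exp_mono. nra. } rewrite exp_ln in H0; lra.
Qed.

Lemma rpow_le1 x a : 0 <= x <= 1 -> 0 <= a -> rpow x a <= 1.
Proof.
  intros Hx Ha. destruct (Req_dec x 0) as [->|Hx0].
  - unfold rpow. destruct (Rlt_dec 0 0). lra. lra.
  - rewrite rpow_pos_eq by lra. unfold Rpower.
    assert (ln x <= 0). { rewrite <- ln_1. apply ln_mono; lra. }
    assert (exp (a * ln x) <= exp 0). { apply exp_mono. nra. } rewrite exp_0 in H0. lra.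
Qed.

Lemma locally_pos x : 0 < x -> locally x (fun y => 0 < y).
Proof. intros H. apply (open_gt 0). exact H. Qed.

Lemma is_derive_rpow x a : 0 < x -> is_derive (fun y => rpow y a) x (a * rpow x (a - 1)).
Proof.
  intros Hx. rewrite (rpow_pos_eq x (a - 1)) by auto.
  apply (is_derive_ext_loc (fun y => Rpower y a)).
  - generalize (locally_pos x Hx). apply filter_imp. intros y Hy. rewrite rpow_pos_eq; auto.
  - apply is_derive_Reals. apply derivable_pt_lim_power. auto.
Qed.

Lemma is_derive_rpow_comp (U : R -> R) t d a : is_derive U t d -> 0 < U t ->
  is_derive (fun y => rpow (U y) a) t (a * rpow (U t) (a - 1) * d).
Proof.
  intros HU Hp.
  replace (a * rpow (U t) (a - 1) * d) with (scal d (a * rpow (U t) (a - 1))).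
  - apply (is_derive_comp (fun y => rpow y a) U). apply is_derive_rpow; auto. auto.
  - unfold scal; simpl; unfold mult; simpl. ring.
Qed.

Lemma inv_deriv (Phi U : R -> R) xi d :
  (forall y, Phi (U y) = y) ->
  (forall e, 0 < e -> exists a, 0 < a /\ forall y, Rabs (y - xi) < a -> Rabs (U y - U xi) < e) ->
  derivable_pt_lim Phi (U xi) d -> d <> 0 -> derivable_pt_lim U xi (1 / d).
Proof.
  intros Hinv Hc HD Hd eps Heps.
  assert (Had : 0 < Rabs d) by (apply Rabs_pos_lt; auto).
  set (e' := Rmin (Rabs d / 2) (eps * Rabs d * Rabs d / 2)).
  assert (He' : 0 < e'). { unfold e'. apply Rmin_pos. lra. assert (0 < eps * Rabs d * Rabs d) by (repeat apply Rmult_lt_0_compat; auto). lra. }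
  destruct (HD e' He') as [d1 Hd1].
  destruct (Hc d1 (cond_pos d1)) as [a [Ha Hca]].
  exists (mkposreal a Ha). intros h Hh0 Hh. simpl in Hh.
  set (k := U (xi + h) - U xi).
  assert (Hk : k <> 0).
  { unfold k. intros Hk. assert (U (xi + h) = U xi) by lra.
    assert (Phi (U (xi + h)) = Phi (U xi)) by (rewrite H; auto). rewrite !Hinv in H0. lra. }
  assert (Hk2 : Rabs k < d1). { unfold k. apply Hca. replace (xi + h - xi) with h by ring. auto. }
  specialize (Hd1 k Hk Hk2).
  replace (U xi + k) with (U (xi + h)) in Hd1 by (unfold k; ring).
  rewrite !Hinv in Hd1. replace (xi + h - xi) with h in Hd1 by ring.
  set (r := h / k) in *.
  assert (Hr1 : Rabs (r - d) < Rabs d / 2). { eapply Rlt_le_trans. apply Hd1. apply Rmin_l. }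
  assert (Hr2 : Rabs (r - d) < eps * Rabs d * Rabs d / 2). { eapply Rlt_le_trans. apply Hd1. apply Rmin_r. }
  assert (Hr : Rabs d / 2 < Rabs r).
  { assert (Rabs d <= Rabs r + Rabs (r - d)).
    { replace d with (r - (r - d)) at 1 by ring. eapply Rle_trans. apply Rabs_triang. rewrite Rabs_Ropp. lra. }
    lra. }
  assert (Hr0 : r <> 0). { intros H0. rewrite H0, Rabs_R0 in Hr. lra. }
  replace (k / h - 1 / d) with ((d - r) / (r * d)).
  2:{ unfold r. field. repeat split; auto. }
  unfold Rdiv. rewrite Rabs_mult, Rabs_inv, Rabs_mult.
  rewrite <- Rabs_Ropp. replace (- (d - r)) with (r - d) by ring.
  apply (Rmult_lt_reg_r (Rabs r * Rabs d)). apply Rmult_lt_0_compat; lra.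
  rewrite Rmult_assoc, Rinv_l, Rmult_1_r by (apply Rgt_not_eq; apply Rmult_lt_0_compat; lra).
  assert (eps * Rabs d * Rabs d / 2 <= eps * (Rabs r * Rabs d)).
  { assert (Rabs d * Rabs d / 2 <= Rabs r * Rabs d) by nra. nra. }
  lra.
Qed.

Lemma deriv_lim_zero_minf (V dV : R -> R) B L : (forall x, is_derive V x (dV x)) ->
  (forall x, Rabs (V x) <= B) -> is_lim dV m_infty (Finite L) -> L = 0.
Proof.
  intros HD HB HL. destruct (Req_dec L 0) as [|HL0]; auto. exfalso.
  assert (Ha : 0 < Rabs L) by (apply Rabs_pos_lt; auto).
  destruct (lim_minf_elim dV L HL (Rabs L / 2)) as [M HM]. lra.
  set (b := M - 1). set (T := 4 * (B + 1) / Rabs L). set (a := b - T).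
  assert (HB0 : 0 <= B) by (eapply Rle_trans; [apply Rabs_pos| apply (HB 0)]).
  assert (HT : 0 < T) by (unfold T; apply Rdiv_lt_0_compat; lra).
  destruct (MVT_gen V a b dV) as [c [Hc He]].
  - intros; apply HD.
  - intros; eapply cont_of_derive; apply HD.
  - rewrite Rmin_left in Hc by (unfold a; lra). rewrite Rmax_right in Hc by (unfold a; lra).
    assert (Hc1 : Rabs (dV c - L) < Rabs L / 2) by (apply HM; unfold b in Hc; lra).
    assert (Hc2 : Rabs L / 2 < Rabs (dV c)).
    { assert (Rabs L <= Rabs (dV c) + Rabs (dV c - L)).
      { replace L with (dV c - (dV c - L)) at 1 by ring. eapply Rle_trans. apply Rabs_triang. rewrite Rabs_Ropp. lra. }
      lra. }
    assert (Rabs (V b - V a) <= 2 * B).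
    { eapply Rle_trans. apply Rabs_triang. rewrite Rabs_Ropp. generalize (HB a) (HB b). lra. }
    rewrite He, Rabs_mult in H. replace (b - a) with T in H by (unfold a; ring).
    rewrite (Rabs_pos_eq T) in H by lra.
    assert (Rabs L / 2 * T <= Rabs (dV c) * T) by (apply Rmult_le_compat_r; lra).
    assert (Rabs L / 2 * T = 2 * (B + 1)) by (unfold T; field; lra).
    lra.
Qed.

Lemma deriv_lim_zero_pinf (V dV : R -> R) B L : (forall x, is_derive V x (dV x)) ->
  (forall x, Rabs (V x) <= B) -> is_lim dV p_infty (Finite L) -> L = 0.
Proof.
  intros HD HB HL. destruct (Req_dec L 0) as [|HL0]; auto. exfalso.
  assert (Ha : 0 < Rabs L) by (apply Rabs_pos_lt; auto).
  destruct (lim_pinf_elim dV L HL (Rabs L / 2)) as [M HM]. lra.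
  set (a := M + 1). set (T := 4 * (B + 1) / Rabs L). set (b := a + T).
  assert (HB0 : 0 <= B) by (eapply Rle_trans; [apply Rabs_pos| apply (HB 0)]).
  assert (HT : 0 < T) by (unfold T; apply Rdiv_lt_0_compat; lra).
  destruct (MVT_gen V a b dV) as [c [Hc He]].
  - intros; apply HD.
  - intros; eapply cont_of_derive; apply HD.
  - rewrite Rmin_left in Hc by (unfold b; lra). rewrite Rmax_right in Hc by (unfold b; lra).
    assert (Hc1 : Rabs (dV c - L) < Rabs L / 2) by (apply HM; unfold a in Hc; lra).
    assert (Hc2 : Rabs L / 2 < Rabs (dV c)).
    { assert (Rabs L <= Rabs (dV c) + Rabs (dV c - L)).
      { replace L with (dV c - (dV c - L)) at 1 by ring. eapply Rle_trans. apply Rabs_triang. rewrite Rabs_Ropp. lra. }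
      lra. }
    assert (Rabs (V b - V a) <= 2 * B).
    { eapply Rle_trans. apply Rabs_triang. rewrite Rabs_Ropp. generalize (HB a) (HB b). lra. }
    rewrite He, Rabs_mult in H. replace (b - a) with T in H by (unfold b; ring).
    rewrite (Rabs_pos_eq T) in H by lra.
    assert (Rabs L / 2 * T <= Rabs (dV c) * T) by (apply Rmult_le_compat_r; lra).
    assert (Rabs L / 2 * T = 2 * (B + 1)) by (unfold T; field; lra).
    lra.
Qed.

Lemma gron_right (w dw : R -> R) K a b : a < b ->
  (forall x, a <= x <= b -> is_derive w x (dw x)) ->
  (forall x, a <= x <= b -> dw x <= K * w x) -> w a = 0 -> 0 < w b -> False.
Proof.
  intros Hab HD HK Ha Hb.
  assert (H : (fun x => w x * exp (- K * x)) b <= (fun x => w x * exp (- K * x)) a).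
  { apply (decr_on (fun x => w x * exp (- K * x)) (fun x => dw x * exp (- K * x) + w x * (- K * exp (- K * x)))). lra.
    - intros x Hx. apply (is_derive_mult w (fun x => exp (- K * x))). apply HD; auto.
      auto_derive; auto. ring.
      intros; unfold mult; simpl; ring.
    - intros x Hx. specialize (HK x Hx). assert (0 < exp (- K * x)) by apply exp_pos. nra. }
  simpl in H. rewrite Ha in H. assert (0 < w b * exp (- K * b)) by (apply Rmult_lt_0_compat; auto; apply exp_pos). lra.
Qed.

Lemma gron_left (w dw : R -> R) K a b : a < b ->
  (forall x, a <= x <= b -> is_derive w x (dw x)) ->
  (forall x, a <= x <= b -> - K * w x <= dw x) -> w b = 0 -> 0 < w a -> False.
Proof.
  intros Hab HD HK Hb Ha.
  assert (H : (fun x => w x * exp (K * x)) a <= (fun x => w x * exp (K * x)) b).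
  { apply (incr_on (fun x => w x * exp (K * x)) (fun x => dw x * exp (K * x) + w x * (K * exp (K * x)))). lra.
    - intros x Hx. apply (is_derive_mult w (fun x => exp (K * x))). apply HD; auto.
      auto_derive; auto. ring.
      intros; unfold mult; simpl; ring.
    - intros x Hx. specialize (HK x Hx). assert (0 < exp (K * x)) by apply exp_pos. nra. }
  simpl in H. rewrite Hb in H. assert (0 < w a * exp (K * a)) by (apply Rmult_lt_0_compat; auto; apply exp_pos). lra.
Qed.

Definition hfun (f : R -> R) (mu m s um u : R) : R :=
  gfun f s um u * rpow u (1 - m) / (mu * m).

Lemma ivt_decr (U : R -> R) a b y : a < b -> (forall x, a <= x <= b -> continuity_pt U x) ->
  U b < y < U a -> exists z, a < z < b /\ U z = y.
Proof.
  intros Hab Hc Hy.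
  destruct (IVT_interv (fun t => y - U t) a b) as [z [Hz Hz2]]; auto.
  - intros x Hx. apply continuity_pt_minus. apply continuity_pt_const. intros ? ?; auto. apply Hc; auto.
  - lra.
  - lra.
  - exists z. split; [|lra]. destruct Hz as [[H1|H1] [H2|H2]]; subst; try lra.
Qed.

Lemma smooth_d1 f x : smooth f -> is_derive f x (Derive f x).
Proof. intros Hf. apply Derive_correct. exact (Hf 1%nat x). Qed.

Lemma smooth_d2 f x : smooth f -> is_derive (Derive f) x (Derive (Derive f) x).
Proof. intros Hf. apply Derive_correct. exact (Hf 2%nat x). Qed.

Lemma smooth_cont f x : smooth f -> continuity_pt f x.
Proof. intros Hf. eapply cont_of_derive. apply smooth_d1; auto. Qed.

Lemma g_deriv f s um u : smooth f -> is_derive (gfun f s um) u (- s + Derive f u).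
Proof.
  intros Hf. unfold gfun. auto_derive.
  - exact (Hf 1%nat u).
  - change (fun x => f x) with f. ring.
Qed.

Lemma g_deriv2 f s u : smooth f -> is_derive (fun u => - s + Derive f u) u (Derive (Derive f) u).
Proof.
  intros Hf. auto_derive. exact (Hf 2%nat u). change (fun x => Derive f x) with (Derive f). ring.
Qed.

Lemma g_zero_l f s um : s = (f 0 - f um) / (0 - um) -> 0 < um -> gfun f s um 0 = 0.
Proof. intros Hs Hum. unfold gfun. rewrite Hs. field. lra. Qed.

Lemma g_zero_r f s um : gfun f s um um = 0.
Proof. unfold gfun. ring. Qed.

Lemma deriv_nonpos_of_decr (V : R -> R) x d : is_derive V x d ->
  (forall y, x <= y -> V y <= V x) -> d <= 0.
Proof.
  intros HD HM. apply is_derive_Reals in HD.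
  destruct (Rle_lt_dec d 0) as [|Hd]; auto. exfalso.
  destruct (HD (d / 2)) as [del Hdel]. lra.
  set (h := del / 2). assert (Hh : 0 < h) by (unfold h; generalize (cond_pos del); lra).
  assert (Rabs h < del) by (rewrite Rabs_pos_eq; unfold h; generalize (cond_pos del); lra).
  specialize (Hdel h (Rgt_not_eq _ _ Hh) H).
  assert (V (x + h) <= V x) by (apply HM; lra).
  assert ((V (x + h) - V x) / h <= 0).
  { unfold Rdiv. apply Rmult_le_0_r. lra. left. apply Rinv_0_lt_compat. auto. }
  apply Rabs_def2 in Hdel. lra.
Qed.

Lemma deriv_zero_at_min (V : R -> R) x d : is_derive V x d ->
  (forall y, V x <= V y) -> d = 0.
Proof.
  intros HD HM. apply is_derive_Reals in HD.
  destruct (Rtotal_order d 0) as [Hd|[Hd|Hd]]; auto; exfalso.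
  - destruct (HD (- d / 2)) as [del Hdel]. lra.
    set (h := del / 2). assert (Hh : 0 < h) by (unfold h; generalize (cond_pos del); lra).
    assert (Rabs h < del) by (rewrite Rabs_pos_eq; unfold h; generalize (cond_pos del); lra).
    specialize (Hdel h (Rgt_not_eq _ _ Hh) H).
    assert (0 <= (V (x + h) - V x) / h).
    { unfold Rdiv. apply Rmult_le_pos. generalize (HM (x + h)); lra. left. apply Rinv_0_lt_compat. auto. }
    apply Rabs_def2 in Hdel. lra.
  - destruct (HD (d / 2)) as [del Hdel]. lra.
    set (h := - (del / 2)). assert (Hh : h < 0) by (unfold h; generalize (cond_pos del); lra).
    assert (Rabs h < del) by (rewrite Rabs_left; unfold h; generalize (cond_pos del); lra).
    specialize (Hdel h (Rlt_not_eq _ _ Hh) H).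
    assert ((V (x + h) - V x) / h <= 0).
    { unfold Rdiv. apply Rmult_le_0_l. generalize (HM (x + h)); lra. left. apply Rinv_lt_0_compat. auto. }
    apply Rabs_def2 in Hdel. lra.
Qed.

Lemma rpow_cancel x a : 0 < x -> rpow x a * rpow x (- a) = 1.
Proof.
  intros Hx. rewrite !rpow_pos_eq by auto. rewrite <- Rpower_plus.
  replace (a + - a) with 0 by ring. apply Rpower_O; auto.
Qed.
Lemma is_derive_lin3 (A B C : R -> R) a b x dA dB dC : is_derive A x dA -> is_derive B x dB -> is_derive C x dC ->
  is_derive (fun x => a * A x + b * B x - C x) x (a * dA + b * dB - dC).
Proof.
  intros HA HB HC.
  apply (is_derive_minus (fun x => a * A x + b * B x) C).
  apply (is_derive_plus (fun x => a * A x) (fun x => b * B x)).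
  apply (is_derive_scal A); auto. apply (is_derive_scal B); auto. auto.
Qed.
Lemma is_derive_cminus (U : R -> R) c x d : is_derive U x d -> is_derive (fun t => c - U t) x (- d).
Proof.
  intros H. replace (- d) with (0 - d) by ring.
  apply (is_derive_minus (fun _ => c) U). apply (is_derive_const c). auto.
Qed.
Lemma is_derive_mulc (U : R -> R) c x d : is_derive U x d -> is_derive (fun t => U t * c) x (d * c).
Proof.
  intros H. apply (is_derive_ext (fun t => c * U t) (fun t => U t * c)). intros; apply Rmult_comm. replace (d * c) with (c * d) by ring.
  apply (is_derive_scal U). auto.
Qed.
Lemma cont_of_ex_derive (F : R -> R) x : ex_derive F x -> continuous F x.
Proof. intros [d H]. apply continuity_pt_filterlim. eapply cont_of_derive. exact H. Qed.

Lemma h_abs_bound f mu m s um u : 0 < m -> m < 1 -> 0 < mu -> 0 <= u ->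
  Rabs (hfun f mu m s um u) <= Rabs (gfun f s um u) * (1 + u) / (mu * m).
Proof.
  intros Hm0 Hm1 Hmu Hu. unfold hfun.
  assert (Hmm : 0 < mu * m) by (apply Rmult_lt_0_compat; auto).
  unfold Rdiv. rewrite !Rabs_mult, Rabs_inv, (Rabs_pos_eq (mu * m)) by lra.
  rewrite (Rabs_pos_eq (rpow u (1 - m))) by apply rpow_ge0.
  apply Rmult_le_compat_r. left; apply Rinv_0_lt_compat; auto.
  apply Rmult_le_compat_l. apply Rabs_pos. apply rpow_bound; lra.
Qed.

Lemma no_reach f mu m s um U u0 x0 :
  0 < m -> m < 1 -> 0 < mu -> smooth f ->
  (forall x y, x <= y -> U y <= U x) ->
  is_lim U p_infty 0 ->
  (forall x, 0 < U x) ->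
  (forall x, is_derive U x (hfun f mu m s um (U x))) ->
  0 < u0 -> gfun f s um u0 = 0 -> U x0 = u0 -> False.
Proof.
  intros Hm0 Hm1 Hmu Hf HM Hlp Hpos HD Hu0 Hg0 Hx0.
  assert (Hmm : 0 < mu * m) by (apply Rmult_lt_0_compat; auto).
  destruct (deriv_loc_bound (gfun f s um) u0 _ (g_deriv f s um u0 Hf)) as [del [Hdel Hb]].
  set (K1 := Rabs (- s + Derive f u0) + 1).
  set (eta := Rmin del u0 / 2).
  assert (Heta : 0 < eta /\ eta < del /\ eta < u0).
  { unfold eta. generalize (Rmin_l del u0) (Rmin_r del u0). intros.
    assert (0 < Rmin del u0) by (apply Rmin_pos; auto). lra. }
  destruct (lim_pinf_elim U 0 Hlp (u0 - eta)) as [M HMl]. lra.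
  set (y := Rmax M x0 + 1).
  assert (Hy : U y < u0 - eta).
  { assert (M < y) by (unfold y; generalize (Rmax_l M x0); lra).
    specialize (HMl y H). rewrite Rminus_0_r in HMl. apply Rabs_def2 in HMl. lra. }
  assert (Hxy : x0 < y) by (unfold y; generalize (Rmax_r M x0); lra).
  destruct (ivt_decr U x0 y (u0 - eta)) as [x1 [Hx1 HUx1]]; auto.
  { intros; eapply cont_of_derive; apply HD. } lra.
  apply (gron_right (fun t => u0 - U t) (fun t => - hfun f mu m s um (U t))
           (K1 * (1 + u0) / (mu * m)) x0 x1).
  - lra.
  - intros x Hx. apply is_derive_cminus. apply HD.
  - intros x Hx.
    assert (HUx : u0 - eta <= U x <= u0).
    { split. rewrite <- HUx1. apply HM; lra. rewrite <- Hx0. apply HM; lra. }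
    assert (Hgb : Rabs (gfun f s um (U x)) <= K1 * (u0 - U x)).
    { specialize (Hb (U x)). rewrite Hg0, Rminus_0_r in Hb.
      rewrite (Rabs_left1 (U x - u0)) in Hb by lra.
      replace (- (U x - u0)) with (u0 - U x) in Hb by ring.
      apply Hb. lra. }
    eapply Rle_trans. apply Rle_abs. rewrite Rabs_Ropp.
    eapply Rle_trans. apply h_abs_bound; auto. generalize (Hpos x); lra.
    assert (0 <= 1 + U x <= 1 + u0) by (generalize (Hpos x); lra).
    assert (0 <= K1) by (unfold K1; generalize (Rabs_pos (- s + Derive f u0)); lra).
    assert (Rabs (gfun f s um (U x)) * (1 + U x) <= K1 * (u0 - U x) * (1 + u0)).
    { apply Rmult_le_compat; [apply Rabs_pos|lra|exact Hgb|lra]. }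
    replace (K1 * (1 + u0) / (mu * m) * (u0 - U x)) with ((K1 * (u0 - U x) * (1 + u0)) / (mu * m)) by (field; lra).
    unfold Rdiv. apply Rmult_le_compat_r. left; apply Rinv_0_lt_compat; auto.
    lra.
  - rewrite Hx0. ring.
  - rewrite HUx1. lra.
Qed.

Lemma profile_facts m mu f um s U :
  0 < m -> m < 1 -> 0 < mu -> smooth f -> 0 < um -> is_profile f mu m s um U ->
  s = (f 0 - f um) / (0 - um) /\
  (forall x, 0 < U x < um) /\
  (forall x, is_derive U x (hfun f mu m s um (U x))) /\
  (forall u, 0 < u < um -> gfun f s um u < 0).
Proof.
  intros Hm0 Hm1 Hmu Hf Hum [HM [Hlm [Hlp HE]]].
  assert (Hmm : 0 < mu * m) by (apply Rmult_lt_0_compat; auto).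
  set (V := fun x => rpow (U x) m). set (dV := Derive V).
  assert (HU' : forall x, is_derive U x (Derive U x)) by (intro x; apply Derive_correct; apply HE).
  assert (HV' : forall x, is_derive V x (dV x)) by (intro x; apply Derive_correct; apply HE).
  assert (HdV' : forall x, is_derive dV x (Derive dV x)) by (intro x; apply Derive_correct; apply HE).
  assert (Hfu : forall x, is_derive (fun x => f (U x)) x (Derive f (U x) * Derive U x)).
  { intros x. replace (Derive f (U x) * Derive U x) with (scal (Derive U x) (Derive f (U x))).
    apply (is_derive_comp f U). apply smooth_d1; auto. auto.
    unfold scal; simpl; unfold mult; simpl. ring. }
  assert (Hcont : forall x, continuity_pt U x) by (intro x; eapply cont_of_derive; apply HU').
  assert (Hub : forall x, U x <= um).
  { intros x. destruct (Rle_lt_dec (U x) um) as [|Hx]; auto. exfalso.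
    destruct (lim_minf_elim U um Hlm (U x - um)) as [M HM']. lra.
    set (y := Rmin M x - 1).
    assert (y < M) by (unfold y; generalize (Rmin_l M x); lra).
    assert (y <= x) by (unfold y; generalize (Rmin_r M x); lra).
    specialize (HM' y H). apply Rabs_def2 in HM'. specialize (HM y x H0). lra. }
  assert (Hlb : forall x, 0 <= U x).
  { intros x. destruct (Rle_lt_dec 0 (U x)) as [|Hx]; auto. exfalso.
    destruct (lim_pinf_elim U 0 Hlp (- U x)) as [M HM']. lra.
    set (y := Rmax M x + 1).
    assert (M < y) by (unfold y; generalize (Rmax_l M x); lra).
    assert (x <= y) by (unfold y; generalize (Rmax_r M x); lra).
    specialize (HM' y H). apply Rabs_def2 in HM'. specialize (HM x y H0). lra. }
  set (Q := fun x => mu * dV x + s * U x - f (U x)).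
  assert (HQ : forall x, is_derive Q x 0).
  { intros x. destruct (HE x) as [_ [_ [_ Hode]]].
    assert (Hx1 : Derive (fun x => f (U x)) x = Derive f (U x) * Derive U x) by (apply is_derive_unique; apply Hfu). rewrite Hx1 in Hode.
    replace 0 with (mu * Derive dV x + s * Derive U x - Derive f (U x) * Derive U x).
    apply is_derive_lin3; auto. fold V dV in Hode. lra. }
  set (Q0 := Q 0).
  assert (HdVe : forall x, dV x = (Q0 - s * U x + f (U x)) / mu).
  { intros x. assert (Q x = Q0) by (apply const_deriv; auto). unfold Q in H. field_simplify_eq. lra. lra. }
  set (G := fun u => (Q0 - s * u + f u) / mu).
  assert (HGc : forall u, continuous G u).
  { intros u. apply cont_of_ex_derive. unfold G. auto_derive. exact (Hf 1%nat u). }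
  assert (HVb : forall x, Rabs (V x) <= 1 + um).
  { intros x. unfold V. rewrite Rabs_pos_eq by apply rpow_ge0.
    eapply Rle_trans. apply rpow_bound. auto. lra. generalize (Hub x); lra. }
  assert (HL1 : G um = 0).
  { apply (deriv_lim_zero_minf V dV (1 + um)); auto.
    apply (is_lim_ext (fun x => G (U x))). intros; rewrite HdVe; auto.
    apply is_lim_comp_continuous; auto. }
  assert (HL2 : G 0 = 0).
  { apply (deriv_lim_zero_pinf V dV (1 + um)); auto.
    apply (is_lim_ext (fun x => G (U x))). intros; rewrite HdVe; auto.
    apply is_lim_comp_continuous; auto. }
  unfold G in HL1, HL2.
  assert (HQ0a : Q0 = s * um - f um).
  { apply (Rmult_eq_compat_r mu) in HL1. field_simplify in HL1; lra. }
  assert (HQ0b : Q0 = - f 0).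
  { apply (Rmult_eq_compat_r mu) in HL2. field_simplify in HL2; lra. }
  assert (HRH : s = (f 0 - f um) / (0 - um)).
  { field_simplify_eq. lra. lra. }
  assert (HdVg : forall x, mu * dV x = gfun f s um (U x)).
  { intros x. rewrite HdVe. unfold gfun. field_simplify_eq. rewrite HQ0a. ring. lra. }
  assert (HdVn : forall x, dV x <= 0).
  { intros x. apply (deriv_nonpos_of_decr V x); auto. intros y Hy. unfold V.
    apply rpow_le_base. split. apply Hlb. apply HM; auto. lra. }
  assert (Hh : forall x, 0 < U x -> is_derive U x (hfun f mu m s um (U x))).
  { intros x Hx. replace (hfun f mu m s um (U x)) with (Derive U x). apply HU'.
    assert (dV x = m * rpow (U x) (m - 1) * Derive U x).
    { apply is_derive_unique. apply is_derive_rpow_comp; auto. }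
    unfold hfun. rewrite <- HdVg. rewrite H.
    assert (rpow (U x) (m - 1) * rpow (U x) (- (m - 1)) = 1) by (apply rpow_cancel; auto).
    replace (- (m - 1)) with (1 - m) in H0 by ring.
    replace (mu * (m * rpow (U x) (m - 1) * Derive U x) * rpow (U x) (1 - m))
      with (mu * m * Derive U x * (rpow (U x) (m - 1) * rpow (U x) (1 - m))) by ring.
    rewrite H0. field. lra. }
  assert (Hpos : forall x, 0 < U x).
  { intros x0. destruct (Rle_lt_dec (U x0) 0) as [Hx0|]; auto. exfalso.
    assert (Hx0' : U x0 = 0) by (generalize (Hlb x0); lra).
    destruct (deriv_loc_bound (gfun f s um) 0 _ (g_deriv f s um 0 Hf)) as [del [Hdel Hb]].
    rewrite (g_zero_l f s um HRH Hum) in Hb.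
    set (K1 := Rabs (- s + Derive f 0) + 1).
    set (eta := Rmin (Rmin del um) 1 / 2).
    assert (Heta : 0 < eta /\ eta < del /\ eta < um /\ eta < 1).
    { unfold eta. generalize (Rmin_l (Rmin del um) 1) (Rmin_r (Rmin del um) 1) (Rmin_l del um) (Rmin_r del um). intros.
      assert (0 < Rmin (Rmin del um) 1) by (apply Rmin_pos; [apply Rmin_pos|]; lra). lra. }
    destruct (lim_minf_elim U um Hlm (um - eta)) as [M HMl]. lra.
    set (y := Rmin M x0 - 1).
    assert (Hy : eta < U y).
    { assert (y < M) by (unfold y; generalize (Rmin_l M x0); lra).
      specialize (HMl y H). apply Rabs_def2 in HMl. lra. }
    assert (Hxy : y < x0) by (unfold y; generalize (Rmin_r M x0); lra).
    destruct (ivt_decr U y x0 eta) as [x1 [Hx1 HUx1]]; auto. lra.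
    apply (gron_left U (Derive U) (K1 / (mu * m)) x1 x0).
    - lra.
    - intros; auto.
    - intros x Hx.
      assert (HUx : 0 <= U x <= eta).
      { split. auto. rewrite <- HUx1. apply HM; lra. }
      destruct (Req_dec (U x) 0) as [HU0|HU0].
      + rewrite HU0. rewrite (deriv_zero_at_min U x (Derive U x)); auto. lra.
        intros; rewrite HU0; auto.
      + assert (HUp : 0 < U x) by lra.
        rewrite (is_derive_unique _ _ _ (Hh x HUp)).
        assert (Hgb : Rabs (gfun f s um (U x)) <= K1 * U x).
        { specialize (Hb (U x)). rewrite !Rminus_0_r in Hb.
          rewrite (Rabs_pos_eq (U x)) in Hb by lra. apply Hb. lra. }
        unfold hfun.
        assert (rpow (U x) (1 - m) <= 1) by (apply rpow_le1; lra).
        assert (0 <= rpow (U x) (1 - m)) by apply rpow_ge0.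
        assert (Hgb2 : - (K1 * U x) <= gfun f s um (U x)) by (generalize (Rle_abs (- gfun f s um (U x))); rewrite Rabs_Ropp; lra).
        assert (- (K1 * U x) * rpow (U x) (1 - m) >= - (K1 * U x)).
        { assert (0 <= K1 * U x). { unfold K1. generalize (Rabs_pos (- s + Derive f 0)). nra. } nra. }
        assert (gfun f s um (U x) * rpow (U x) (1 - m) >= - (K1 * U x) * rpow (U x) (1 - m)) by nra.
        unfold Rdiv. apply (Rmult_le_reg_r (mu * m)); auto.
        replace (gfun f s um (U x) * rpow (U x) (1 - m) * / (mu * m) * (mu * m)) with (gfun f s um (U x) * rpow (U x) (1 - m)) by (field; lra).
        replace (- (K1 * / (mu * m)) * U x * (mu * m)) with (- (K1 * U x)) by (field; lra). lra.
    - auto.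
    - rewrite HUx1; lra. }
  assert (Hh' : forall x, is_derive U x (hfun f mu m s um (U x))) by (intros; apply Hh; auto).
  assert (Hlt : forall x, U x < um).
  { intros x. destruct (Rle_lt_dec um (U x)); auto. exfalso.
    apply (no_reach f mu m s um U um x); auto. apply g_zero_r. generalize (Hub x); lra. }
  split; auto. split. intros; split; auto. split; auto.
  intros u Hu.
  destruct (lim_minf_elim U um Hlm (um - u)) as [M1 HM1]. lra.
  destruct (lim_pinf_elim U 0 Hlp u) as [M2 HM2]. lra.
  set (a := M1 - 1). set (b := Rmax M2 a + 1).
  assert (Ha : u < U a). { specialize (HM1 a). assert (a < M1) by (unfold a; lra). apply HM1 in H. apply Rabs_def2 in H. lra. }
  assert (Hb : U b < u). { specialize (HM2 b). assert (M2 < b) by (unfold b; generalize (Rmax_l M2 a); lra). apply HM2 in H. apply Rabs_def2 in H. lra. }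
  assert (Hab : a < b) by (unfold b; generalize (Rmax_r M2 a); lra).
  destruct (ivt_decr U a b u) as [xi [Hxi HUxi]]; auto.
  assert (gfun f s um u <= 0).
  { rewrite <- HUxi, <- HdVg. generalize (HdVn xi). nra. }
  destruct H; auto. exfalso.
  apply (no_reach f mu m s um U u xi); auto. lra.
Qed.

Definition Hyp (m mu : R) (f : R -> R) (um s : R) : Prop :=
  0 < m /\ m < 1 /\ 0 < mu /\ smooth f /\ 0 < um /\ s = (f 0 - f um) / (0 - um) /\
  (forall u, 0 < u < um -> gfun f s um u < 0).

Lemma h_is_derive f mu m s um u : smooth f -> 0 < u ->
  is_derive (hfun f mu m s um) u
    (((- s + Derive f u) * rpow u (1 - m) + gfun f s um u * ((1 - m) * rpow u (1 - m - 1))) / (mu * m)).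
Proof.
  intros Hf Hu. unfold hfun.
  apply (is_derive_ext (fun u => (gfun f s um u * rpow u (1 - m)) * / (mu * m))). intros; reflexivity.
  unfold Rdiv. apply (is_derive_mulc (fun u => gfun f s um u * rpow u (1 - m))).
  apply (is_derive_mult (gfun f s um) (fun u => rpow u (1 - m))).
  apply g_deriv; auto. apply is_derive_rpow; auto. intros; apply Rmult_comm.
Qed.

Lemma h_neg m mu f um s u : Hyp m mu f um s -> 0 < u < um -> hfun f mu m s um u < 0.
Proof.
  intros (Hm0 & Hm1 & Hmu & Hf & Hum & HRH & Hg) Hu. unfold hfun.
  assert (0 < mu * m) by (apply Rmult_lt_0_compat; auto).
  assert (0 < rpow u (1 - m)) by (apply rpow_gt0; lra).
  specialize (Hg u Hu).
  unfold Rdiv. apply Rmult_neg_pos. nra. apply Rinv_0_lt_compat; auto.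
Qed.

Definition qfun f mu m s um u := / hfun f mu m s um u.

Lemma q_cont m mu f um s u : Hyp m mu f um s -> 0 < u < um -> continuous (qfun f mu m s um) u.
Proof.
  intros H Hu. destruct H as (Hm0 & Hm1 & Hmu & Hf & Hum & HRH & Hg) eqn:EH.
  apply cont_of_ex_derive. eexists. apply is_derive_inv. apply h_is_derive; auto. lra.
  apply Rlt_not_eq. apply (h_neg m mu f um s u); auto.
Qed.

Definition Phi f mu m s um u := RInt (qfun f mu m s um) (um / 2) u.

Lemma Phi_deriv m mu f um s u : Hyp m mu f um s -> 0 < u < um ->
  is_derive (Phi f mu m s um) u (qfun f mu m s um u).
Proof.
  intros H Hu. pose proof H as (Hm0 & Hm1 & Hmu & Hf & Hum & HRH & Hg).
  unfold Phi. apply (is_derive_RInt (qfun f mu m s um) (fun b => RInt (qfun f mu m s um) (um / 2) b) (um / 2)).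
  - assert (Ho : open (fun x : R => 0 < x /\ x < um)) by (apply open_and; [apply open_gt|apply open_lt]).
    generalize (Ho u Hu). apply filter_imp. intros b Hb.
    apply (RInt_correct (V:=R_CompleteNormedModule)). apply (ex_RInt_continuous (V:=R_CompleteNormedModule)). intros z Hz. apply (q_cont m mu f um s); auto.
    split.
    + eapply Rlt_le_trans; [|apply Hz]. apply Rmin_glb_lt; lra.
    + eapply Rle_lt_trans; [apply Hz|]. apply Rmax_lub_lt; lra.
  - apply (q_cont m mu f um s); auto.
Qed.

Lemma Phi_strict m mu f um s a b : Hyp m mu f um s -> 0 < a -> a < b -> b < um ->
  Phi f mu m s um b < Phi f mu m s um a.
Proof.
  intros H Ha Hab Hb.
  apply (strict_decr_on _ (qfun f mu m s um)); auto.
  - intros x Hx. apply Phi_deriv; auto. lra.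
  - intros x Hx. unfold qfun. apply Rinv_lt_0_compat. apply (h_neg m mu f um s); auto. lra.
Qed.

Lemma Phi_mono m mu f um s a b : Hyp m mu f um s -> 0 < a -> a <= b -> b < um ->
  Phi f mu m s um b <= Phi f mu m s um a.
Proof.
  intros H Ha [Hab|Hab] Hb. left; apply Phi_strict; auto. subst; lra.
Qed.

Lemma is_derive_plus_ln (P : R -> R) c x d : is_derive P x d -> 0 < x ->
  is_derive (fun t => P t + c * ln t) x (d + c / x).
Proof.
  intros HP Hx. apply (is_derive_plus P (fun t => c * ln t)); auto.
  auto_derive. lra. field. lra.
Qed.



Lemma is_derive_minus_ln (P : R -> R) c a x d : is_derive P x d -> x < a ->
  is_derive (fun t => P t - c * ln (a - t)) x (d + c / (a - x)).
Proof.
  intros HP Hx. replace (d + c / (a - x)) with (d - (- c / (a - x))) by (field; lra).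
  apply (is_derive_minus P (fun t => c * ln (a - t))); auto.
  auto_derive. lra. field. lra.
Qed.

Lemma inv_neg_bound h A : 0 < A -> - A <= h -> h < 0 -> / h <= - / A.
Proof.
  intros HA H1 H2.
  assert (/ A <= / (- h)) by (apply Rinv_le_contravar; lra).
  rewrite <- Ropp_inv_permute in H by lra. lra.
Qed.

Lemma Phi_div0 m mu f um s : Hyp m mu f um s ->
  forall Y, exists u, 0 < u < um /\ Y < Phi f mu m s um u.
Proof.
  intros H Y. pose proof H as (Hm0 & Hm1 & Hmu & Hf & Hum & HRH & Hg).
  assert (Hmm : 0 < mu * m) by (apply Rmult_lt_0_compat; auto).
  destruct (deriv_loc_bound (gfun f s um) 0 _ (g_deriv f s um 0 Hf)) as [del [Hdel Hb]].
  rewrite (g_zero_l f s um HRH Hum) in Hb.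
  set (K1 := Rabs (- s + Derive f 0) + 1).
  assert (HK1 : 1 <= K1) by (unfold K1; generalize (Rabs_pos (- s + Derive f 0)); lra).
  set (u1 := Rmin (Rmin del um) 1 / 2).
  assert (Hu1 : 0 < u1 /\ u1 < del /\ u1 < um /\ u1 < 1).
  { unfold u1. generalize (Rmin_l (Rmin del um) 1) (Rmin_r (Rmin del um) 1) (Rmin_l del um) (Rmin_r del um). intros.
    assert (0 < Rmin (Rmin del um) 1) by (apply Rmin_pos; [apply Rmin_pos|]; lra). lra. }
  set (c := mu * m / K1).
  assert (Hc : 0 < c) by (unfold c; apply Rdiv_lt_0_compat; lra).
  assert (Hq : forall t, 0 < t <= u1 -> qfun f mu m s um t <= - c / t).
  { intros t Ht. unfold qfun.
    assert (Hh0 : hfun f mu m s um t < 0) by (apply (h_neg m mu f um s); auto; lra).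
    assert (Hgt : - (K1 * t) <= gfun f s um t).
    { specialize (Hb t). rewrite !Rminus_0_r in Hb. rewrite (Rabs_pos_eq t) in Hb by lra.
      assert (Rabs (gfun f s um t) <= K1 * t) by (apply Hb; lra).
      generalize (Rle_abs (- gfun f s um t)); rewrite Rabs_Ropp; lra. }
    assert (Hr : rpow t (1 - m) <= 1) by (apply rpow_le1; lra).
    assert (Hr0 : 0 <= rpow t (1 - m)) by apply rpow_ge0.
    assert (Hgn : gfun f s um t < 0) by (apply Hg; lra).
    assert (- (K1 * t / (mu * m)) <= hfun f mu m s um t).
    { unfold hfun. unfold Rdiv. rewrite Ropp_mult_distr_l. apply Rmult_le_compat_r. left; apply Rinv_0_lt_compat; auto.
      assert (gfun f s um t <= gfun f s um t * rpow t (1 - m)) by nra. lra. }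
    replace (- c / t) with (- / (K1 * t / (mu * m))) by (unfold c; field; repeat split; lra).
    apply inv_neg_bound; auto. apply Rdiv_lt_0_compat; [apply Rmult_lt_0_compat|]; lra. }
  set (T := Rabs (Y - Phi f mu m s um u1) + 1).
  set (u := u1 * exp (- T / c)).
  assert (Hu : 0 < u < u1).
  { unfold u. split. apply Rmult_lt_0_compat. lra. apply exp_pos.
    assert (exp (- T / c) < 1).
    { rewrite <- exp_0. apply exp_increasing.
      assert (0 < T / c) by (apply Rdiv_lt_0_compat; auto; unfold T; generalize (Rabs_pos (Y - Phi f mu m s um u1)); lra).
      replace (- T / c) with (- (T / c)) by (field; lra). lra. }
    assert (0 < exp (- T / c)) by apply exp_pos. nra. }
  exists u. split. lra.
  assert (HF : (fun t => Phi f mu m s um t + c * ln t) u1 <= (fun t => Phi f mu m s um t + c * ln t) u).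
  { apply (decr_on (fun t => Phi f mu m s um t + c * ln t) (fun t => qfun f mu m s um t + c / t)). lra.
    - intros x Hx. apply is_derive_plus_ln. apply Phi_deriv; auto; lra. lra.
    - intros x Hx. specialize (Hq x (conj (Rlt_le_trans _ _ _ (proj1 Hu) (proj1 Hx)) (proj2 Hx))).
      assert (0 < x) by lra. lra. }
  simpl in HF.
  assert (Hln : ln u = ln u1 - T / c).
  { unfold u. rewrite ln_mult by (try lra; apply exp_pos). rewrite ln_exp. field. lra. }
  rewrite Hln in HF.
  assert (c * (ln u1 - T / c) = c * ln u1 - T) by (field; lra).
  unfold T in *. generalize (Rle_abs (Y - Phi f mu m s um u1)). lra.
Qed.

Lemma Phi_divum m mu f um s : Hyp m mu f um s ->
  forall Y, exists u, 0 < u < um /\ Phi f mu m s um u < Y.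
Proof.
  intros H Y. pose proof H as (Hm0 & Hm1 & Hmu & Hf & Hum & HRH & Hg).
  assert (Hmm : 0 < mu * m) by (apply Rmult_lt_0_compat; auto).
  destruct (deriv_loc_bound (gfun f s um) um _ (g_deriv f s um um Hf)) as [del [Hdel Hb]].
  rewrite (g_zero_r f s um) in Hb.
  set (K1 := Rabs (- s + Derive f um) + 1).
  assert (HK1 : 1 <= K1) by (unfold K1; generalize (Rabs_pos (- s + Derive f um)); lra).
  set (u1 := um - Rmin del um / 2).
  assert (Hu1 : 0 < u1 /\ um - u1 < del /\ u1 < um).
  { unfold u1. generalize (Rmin_l del um) (Rmin_r del um). intros.
    assert (0 < Rmin del um) by (apply Rmin_pos; lra). lra. }
  set (c := mu * m / (K1 * (1 + um))).
  assert (Hc : 0 < c) by (unfold c; apply Rdiv_lt_0_compat; [|apply Rmult_lt_0_compat]; lra).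
  assert (Hq : forall t, u1 <= t < um -> qfun f mu m s um t <= - c / (um - t)).
  { intros t Ht. unfold qfun.
    assert (Hh0 : hfun f mu m s um t < 0) by (apply (h_neg m mu f um s); auto; lra).
    assert (Hgt : - (K1 * (um - t)) <= gfun f s um t).
    { specialize (Hb t). rewrite !Rminus_0_r in Hb. rewrite (Rabs_left1 (t - um)) in Hb by lra.
      replace (- (t - um)) with (um - t) in Hb by ring.
      assert (Rabs (gfun f s um t) <= K1 * (um - t)) by (apply Hb; lra).
      generalize (Rle_abs (- gfun f s um t)); rewrite Rabs_Ropp; lra. }
    assert (Hr : rpow t (1 - m) <= 1 + um) by (eapply Rle_trans; [apply rpow_bound|]; lra).
    assert (Hr0 : 0 <= rpow t (1 - m)) by apply rpow_ge0.
    assert (Hgn : gfun f s um t < 0) by (apply Hg; lra).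
    assert (- (K1 * (um - t) * (1 + um) / (mu * m)) <= hfun f mu m s um t).
    { unfold hfun. unfold Rdiv. rewrite Ropp_mult_distr_l. apply Rmult_le_compat_r. left; apply Rinv_0_lt_compat; auto.
      assert (gfun f s um t * (1 + um) <= gfun f s um t * rpow t (1 - m)) by nra.
      assert (- (K1 * (um - t)) * (1 + um) <= gfun f s um t * (1 + um)) by (apply Rmult_le_compat_r; lra).
      lra. }
    replace (- c / (um - t)) with (- / (K1 * (um - t) * (1 + um) / (mu * m))) by (unfold c; field; repeat split; lra).
    apply inv_neg_bound; auto. apply Rdiv_lt_0_compat; [repeat apply Rmult_lt_0_compat|]; lra. }
  set (T := Rabs (Y - Phi f mu m s um u1) + 1).
  set (u := um - (um - u1) * exp (- T / c)).
  assert (HE : 0 < exp (- T / c) < 1).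
  { split. apply exp_pos. rewrite <- exp_0. apply exp_increasing.
    assert (0 < T / c) by (apply Rdiv_lt_0_compat; auto; unfold T; generalize (Rabs_pos (Y - Phi f mu m s um u1)); lra).
    replace (- T / c) with (- (T / c)) by (field; lra). lra. }
  assert (Hu : u1 < u < um).
  { unfold u. split. assert ((um - u1) * exp (- T / c) < um - u1) by nra. lra.
    assert (0 < (um - u1) * exp (- T / c)) by nra. lra. }
  exists u. split. lra.
  assert (HF : (fun t => Phi f mu m s um t - c * ln (um - t)) u <= (fun t => Phi f mu m s um t - c * ln (um - t)) u1).
  { apply (decr_on (fun t => Phi f mu m s um t - c * ln (um - t)) (fun t => qfun f mu m s um t + c / (um - t))). lra.
    - intros x Hx. apply is_derive_minus_ln. apply Phi_deriv; auto; lra. lra.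
    - intros x Hx. assert (u1 <= x < um) by lra. specialize (Hq x H0).
      lra. }
  simpl in HF.
  assert (Hln : ln (um - u) = ln (um - u1) - T / c).
  { unfold u. replace (um - (um - (um - u1) * exp (- T / c))) with ((um - u1) * exp (- T / c)) by ring.
    rewrite ln_mult by (try lra; apply exp_pos). rewrite ln_exp. field. lra. }
  rewrite Hln in HF.
  assert (c * (ln (um - u1) - T / c) = c * ln (um - u1) - T) by (field; lra).
  unfold T in *. generalize (Rle_abs (- (Y - Phi f mu m s um u1))). rewrite Rabs_Ropp. lra.
Qed.

Lemma Phi_surj m mu f um s : Hyp m mu f um s ->
  forall xi, exists u, 0 < u < um /\ Phi f mu m s um u = xi.
Proof.
  intros H xi.
  destruct (Phi_div0 m mu f um s H xi) as [ua [Hua Ha]].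
  destruct (Phi_divum m mu f um s H xi) as [ub [Hub Hb]].
  assert (Hab : ua < ub).
  { destruct (Rlt_le_dec ua ub); auto. exfalso.
    assert (Phi f mu m s um ua <= Phi f mu m s um ub) by (apply Phi_mono; auto; lra). lra. }
  destruct (IVT_interv (fun t => xi - Phi f mu m s um t) ua ub) as [z [Hz Hz2]]; auto.
  - intros a Ha'. apply continuity_pt_minus. intros e He; exists 1; split; [lra|]. intros; simpl; unfold R_dist; rewrite Rminus_eq_0, Rabs_R0; lra.
    eapply cont_of_derive. apply Phi_deriv; auto. lra.
  - lra.
  - lra.
  - exists z. split. lra. lra.
Qed.

Lemma Uinv_exists m mu f um s : Hyp m mu f um s ->
  exists U, forall xi, 0 < U xi < um /\ Phi f mu m s um (U xi) = xi.
Proof.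
  intros H.
  exists (fun xi => proj1_sig (constructive_indefinite_description _ (Phi_surj m mu f um s H xi))).
  intros xi. apply (proj2_sig (constructive_indefinite_description _ (Phi_surj m mu f um s H xi))).
Qed.

Lemma Phi_inj m mu f um s a b : Hyp m mu f um s -> 0 < a < um -> 0 < b < um ->
  Phi f mu m s um a = Phi f mu m s um b -> a = b.
Proof.
  intros H Ha Hb He. destruct (Rtotal_order a b) as [Hl|[Hl|Hl]]; auto; exfalso.
  - assert (Phi f mu m s um b < Phi f mu m s um a) by (apply Phi_strict; auto; lra). lra.
  - assert (Phi f mu m s um a < Phi f mu m s um b) by (apply Phi_strict; auto; lra). lra.
Qed.

Lemma Uinv_profile m mu f um s U : Hyp m mu f um s ->
  (forall xi, 0 < U xi < um /\ Phi f mu m s um (U xi) = xi) ->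
  is_profile f mu m s um U.
Proof.
  intros H HU. pose proof H as (Hm0 & Hm1 & Hmu & Hf & Hum & HRH & Hg).
  assert (Hmm : 0 < mu * m) by (apply Rmult_lt_0_compat; auto).
  set (P := Phi f mu m s um).
  assert (Hdec : forall x y, x <= y -> U y <= U x).
  { intros x y Hxy. destruct (Rle_lt_dec (U y) (U x)); auto. exfalso.
    assert (P (U y) < P (U x)) by (apply Phi_strict; auto; [apply HU|apply HU]).
    destruct (HU x) as [_ E1]. destruct (HU y) as [_ E2]. unfold P in H0. lra. }
  assert (Hcont : forall xi e, 0 < e -> exists a, 0 < a /\ forall y, Rabs (y - xi) < a -> Rabs (U y - U xi) < e).
  { intros xi e He. set (u := U xi). destruct (HU xi) as [Hu Eu]. fold u in Hu, Eu.
    set (e' := Rmin e (Rmin u (um - u)) / 2).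
    assert (He' : 0 < e' /\ e' < e /\ e' < u /\ e' < um - u).
    { unfold e'. generalize (Rmin_l e (Rmin u (um - u))) (Rmin_r e (Rmin u (um - u))) (Rmin_l u (um - u)) (Rmin_r u (um - u)). intros.
      assert (0 < Rmin e (Rmin u (um - u))) by (apply Rmin_pos; [|apply Rmin_pos]; lra). lra. }
    assert (H1 : P u < P (u - e')) by (apply Phi_strict; auto; lra).
    assert (H2 : P (u + e') < P u) by (apply Phi_strict; auto; lra).
    exists (Rmin (P (u - e') - xi) (xi - P (u + e'))). split.
    - apply Rmin_pos; unfold P in *; lra.
    - intros y Hy. apply Rabs_def2 in Hy. destruct Hy as [Hy1 Hy2].
      generalize (Rmin_l (P (u - e') - xi) (xi - P (u + e'))) (Rmin_r (P (u - e') - xi) (xi - P (u + e'))). intros.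
      destruct (HU y) as [Huy Ey].
      assert (U y < u + e').
      { destruct (Rlt_le_dec (U y) (u + e')); auto. exfalso.
        assert (P (U y) <= P (u + e')) by (apply Phi_mono; auto; lra). unfold P in *; lra. }
      assert (u - e' < U y).
      { destruct (Rlt_le_dec (u - e') (U y)); auto. exfalso.
        assert (P (u - e') <= P (U y)) by (apply Phi_mono; auto; lra). unfold P in *; lra. }
      apply Rabs_def1; lra. }
  assert (HD : forall xi, is_derive U xi (hfun f mu m s um (U xi))).
  { intros xi. apply is_derive_Reals.
    destruct (HU xi) as [Hu Eu].
    assert (Hh : hfun f mu m s um (U xi) < 0) by (apply (h_neg m mu f um s); auto).
    replace (hfun f mu m s um (U xi)) with (1 / qfun f mu m s um (U xi)).
    apply (inv_deriv P U xi). intros; apply HU. apply Hcont. apply is_derive_Reals. apply Phi_deriv; auto.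
    unfold qfun. apply Rinv_neq_0_compat. lra.
    unfold qfun. field. lra. }
  assert (HV : forall xi, is_derive (fun x => rpow (U x) m) xi (gfun f s um (U xi) / mu)).
  { intros xi. destruct (HU xi) as [Hu Eu].
    replace (gfun f s um (U xi) / mu) with (m * rpow (U xi) (m - 1) * hfun f mu m s um (U xi)).
    apply is_derive_rpow_comp; auto. lra.
    unfold hfun. assert (rpow (U xi) (m - 1) * rpow (U xi) (- (m - 1)) = 1) by (apply rpow_cancel; lra).
    replace (- (m - 1)) with (1 - m) in H0 by ring.
    replace (m * rpow (U xi) (m - 1) * (gfun f s um (U xi) * rpow (U xi) (1 - m) / (mu * m)))
      with (gfun f s um (U xi) * (rpow (U xi) (m - 1) * rpow (U xi) (1 - m)) / mu) by (field; lra).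
    rewrite H0. field. lra. }
  assert (HDV : forall xi, Derive (fun x => rpow (U x) m) xi = gfun f s um (U xi) / mu).
  { intros; apply is_derive_unique; apply HV. }
  assert (HW : forall xi, is_derive (fun x => gfun f s um (U x) / mu) xi ((- s + Derive f (U xi)) * hfun f mu m s um (U xi) / mu)).
  { intros xi. unfold Rdiv. apply (is_derive_mulc (fun x => gfun f s um (U x))).
    replace ((- s + Derive f (U xi)) * hfun f mu m s um (U xi)) with (scal (hfun f mu m s um (U xi)) (- s + Derive f (U xi))).
    apply (is_derive_comp (gfun f s um) U). apply g_deriv; auto. auto.
    unfold scal; simpl; unfold mult; simpl; ring. }
  assert (HF : forall xi, is_derive (fun x => f (U x)) xi (Derive f (U xi) * hfun f mu m s um (U xi))).
  { intros xi. replace (Derive f (U xi) * hfun f mu m s um (U xi)) with (scal (hfun f mu m s um (U xi)) (Derive f (U xi))).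
    apply (is_derive_comp f U). apply smooth_d1; auto. auto.
    unfold scal; simpl; unfold mult; simpl; ring. }
  split; [auto|]. split; [|split].
  - apply lim_minf_intro. intros eps Heps.
    set (e' := Rmin eps um / 2).
    assert (He' : 0 < e' /\ e' < eps /\ e' < um).
    { unfold e'. generalize (Rmin_l eps um) (Rmin_r eps um). intros. assert (0 < Rmin eps um) by (apply Rmin_pos; lra). lra. }
    exists (P (um - e')). intros x Hx. destruct (HU x) as [Hu Eu].
    assert (um - e' < U x).
    { destruct (Rlt_le_dec (um - e') (U x)); auto. exfalso.
      assert (P (um - e') <= P (U x)) by (apply Phi_mono; auto; lra). unfold P in *; lra. }
    apply Rabs_def1; lra.
  - apply lim_pinf_intro. intros eps Heps.
    set (e' := Rmin eps um / 2).
    assert (He' : 0 < e' /\ e' < eps /\ e' < um).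
    { unfold e'. generalize (Rmin_l eps um) (Rmin_r eps um). intros. assert (0 < Rmin eps um) by (apply Rmin_pos; lra). lra. }
    exists (P e'). intros x Hx. destruct (HU x) as [Hu Eu].
    assert (U x < e').
    { destruct (Rlt_le_dec (U x) e'); auto. exfalso.
      assert (P (U x) <= P e') by (apply Phi_mono; auto; lra). unfold P in *; lra. }
    apply Rabs_def1; lra.
  - intros xi. split; [|split; [|split]].
    + eexists; apply HD.
    + eexists; apply HV.
    + eexists. apply (is_derive_ext (fun x => gfun f s um (U x) / mu)). intros; rewrite HDV; auto. apply HW.
    + rewrite (is_derive_unique _ _ _ (HD xi)).
      assert (E1 : Derive (fun x => f (U x)) xi = Derive f (U xi) * hfun f mu m s um (U xi)) by (apply is_derive_unique; apply HF).
      rewrite E1.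
      assert (E2 : Derive (Derive (fun x => rpow (U x) m)) xi = (- s + Derive f (U xi)) * hfun f mu m s um (U xi) / mu).
      { rewrite (Derive_ext _ (fun x => gfun f s um (U x) / mu)). apply is_derive_unique; apply HW. intros; apply HDV. }
      rewrite E2. field. lra.
Qed.

Lemma Phi_comp_shift m mu f um s U : Hyp m mu f um s -> is_profile f mu m s um U ->
  forall xi, Phi f mu m s um (U xi) = xi + Phi f mu m s um (U 0).
Proof.
  intros H HP. pose proof H as (Hm0 & Hm1 & Hmu & Hf & Hum & HRH & Hg).
  destruct (profile_facts m mu f um s U Hm0 Hm1 Hmu Hf Hum HP) as (_ & Hb & HD & _).
  assert (HK : forall xi, is_derive (fun x => Phi f mu m s um (U x) - x) xi 0).
  { intros xi. replace 0 with (scal (hfun f mu m s um (U xi)) (qfun f mu m s um (U xi)) - 1).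
    apply (is_derive_minus (fun x => Phi f mu m s um (U x)) (fun x => x)).
    apply (is_derive_comp (Phi f mu m s um) U). apply Phi_deriv; auto. auto. auto_derive; auto.
    unfold scal; simpl; unfold mult; simpl. unfold qfun. field.
    apply Rlt_not_eq. apply (h_neg m mu f um s); auto. }
  intros xi. generalize (const_deriv _ HK xi 0). lra.
Qed.

Lemma profile_unique m mu f um s U1 U2 : Hyp m mu f um s ->
  is_profile f mu m s um U1 -> is_profile f mu m s um U2 ->
  exists c, forall xi, U2 xi = U1 (xi + c).
Proof.
  intros H H1 H2. pose proof H as (Hm0 & Hm1 & Hmu & Hf & Hum & HRH & Hg).
  destruct (profile_facts m mu f um s U1 Hm0 Hm1 Hmu Hf Hum H1) as (_ & Hb1 & _).
  destruct (profile_facts m mu f um s U2 Hm0 Hm1 Hmu Hf Hum H2) as (_ & Hb2 & _).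
  exists (Phi f mu m s um (U2 0) - Phi f mu m s um (U1 0)). intros xi.
  apply (Phi_inj m mu f um s); [auto|apply Hb2|apply Hb1|].
  rewrite (Phi_comp_shift m mu f um s U1 H H1), (Phi_comp_shift m mu f um s U2 H H2). simpl. lra.
Qed.

Lemma rpow_mult_base x y a : 0 < x -> 0 < y -> rpow (x * y) a = rpow x a * rpow y a.
Proof. intros. rewrite !rpow_pos_eq; auto. rewrite Rpower_mult_distr; auto. apply Rmult_lt_0_compat; auto. Qed.

Lemma rpow_rpow x a b : 0 < x -> rpow (rpow x a) b = rpow x (a * b).
Proof. intros. rewrite (rpow_pos_eq x a), (rpow_pos_eq x (a * b)), rpow_pos_eq; auto. apply Rpower_mult.
  unfold Rpower; apply exp_pos. Qed.

Lemma rpow_plus x a b : 0 < x -> rpow x (a + b) = rpow x a * rpow x b.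
Proof. intros. rewrite !rpow_pos_eq; auto. apply Rpower_plus. Qed.

Lemma rpow_one x : 0 < x -> rpow x 1 = x.
Proof. intros. rewrite rpow_pos_eq; auto. apply Rpower_1; auto. Qed.

Lemma rpow_zero x : 0 < x -> rpow x 0 = 1.
Proof. intros. rewrite rpow_pos_eq; auto. apply Rpower_O; auto. Qed.

Lemma rpow_INR x N : 0 < x -> rpow x (INR N) = x ^ N.
Proof. intros. rewrite rpow_pos_eq; auto. apply Rpower_pow; auto. Qed.

Lemma rpow_le_base_neg x y a : 0 < x <= y -> 0 <= a -> rpow y (- a) <= rpow x (- a).
Proof.
  intros Hxy Ha. rewrite !rpow_pos_eq by lra. rewrite !Rpower_Ropp.
  apply Rinv_le_contravar. unfold Rpower; apply exp_pos. apply Rle_Rpower_l; lra.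
Qed.

Lemma equiv_pinfty_intro (a b : R -> R) X c1 c2 : 0 < c1 -> 0 < c2 ->
  (forall x, X < x -> 0 <= b x /\ c1 * b x <= a x /\ a x <= c2 * b x) -> equiv_pinfty a b.
Proof.
  intros H1 H2 H. exists (Rmax 1 (Rmax c2 (/ c1))), X. split. apply Rmax_l.
  intros x Hx. destruct (H x Hx) as (Hb & Ha1 & Ha2).
  set (C := Rmax 1 (Rmax c2 (/ c1))).
  assert (HC1 : 1 <= C) by apply Rmax_l.
  assert (HC2 : c2 <= C) by (eapply Rle_trans; [apply Rmax_l|apply Rmax_r]).
  assert (HC3 : / c1 <= C) by (eapply Rle_trans; [apply Rmax_r|apply Rmax_r]).
  split.
  - unfold Rdiv. assert (/ C <= c1).
    { replace c1 with (/ / c1) by (field; lra). apply Rinv_le_contravar. apply Rinv_0_lt_compat; auto. auto. }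
    eapply Rle_trans; [|apply Ha1]. rewrite (Rmult_comm c1). apply Rmult_le_compat_l; auto.
  - eapply Rle_trans. apply Ha2. apply Rmult_le_compat_r; auto.
Qed.

Lemma equiv_minfty_intro (a b : R -> R) X c1 c2 : 0 < c1 -> 0 < c2 ->
  (forall x, x < X -> 0 <= b x /\ c1 * b x <= a x /\ a x <= c2 * b x) -> equiv_minfty a b.
Proof.
  intros H1 H2 H. exists (Rmax 1 (Rmax c2 (/ c1))), X. split. apply Rmax_l.
  intros x Hx. destruct (H x Hx) as (Hb & Ha1 & Ha2).
  set (C := Rmax 1 (Rmax c2 (/ c1))).
  assert (HC1 : 1 <= C) by apply Rmax_l.
  assert (HC2 : c2 <= C) by (eapply Rle_trans; [apply Rmax_l|apply Rmax_r]).
  assert (HC3 : / c1 <= C) by (eapply Rle_trans; [apply Rmax_r|apply Rmax_r]).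
  split.
  - unfold Rdiv. assert (/ C <= c1).
    { replace c1 with (/ / c1) by (field; lra). apply Rinv_le_contravar. apply Rinv_0_lt_compat; auto. auto. }
    eapply Rle_trans; [|apply Ha1]. rewrite (Rmult_comm c1). apply Rmult_le_compat_l; auto.
  - eapply Rle_trans. apply Ha2. apply Rmult_le_compat_r; auto.
Qed.

Lemma g_bound_from_rep m mu f um s (N : nat) (c : R -> R) dc : Hyp m mu f um s -> (1 <= N)%nat ->
  is_derive c 0 dc -> c 0 <> 0 ->
  (forall u, 0 < u < um -> exists z, 0 <= z <= u /\ gfun f s um u = c z * u ^ N) ->
  exists del A B, 0 < del /\ 0 < A /\ 0 < B /\
    forall u, 0 < u < del -> - B * u ^ N <= gfun f s um u <= - A * u ^ N.
Proof.
  intros H HN Hc Hc0 Hrep. pose proof H as (Hm0 & Hm1 & Hmu & Hf & Hum & HRH & Hg).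
  destruct (deriv_loc_bound c 0 dc Hc) as [d1 [Hd1 Hb]].
  set (K := Rabs dc + 1).
  assert (HK : 1 <= K) by (unfold K; generalize (Rabs_pos dc); lra).
  set (del := Rmin (Rmin d1 um) (Rabs (c 0) / (2 * K))).
  assert (Hca : 0 < Rabs (c 0)) by (apply Rabs_pos_lt; auto).
  assert (Hdel : 0 < del /\ del <= d1 /\ del <= um /\ K * del <= Rabs (c 0) / 2).
  { unfold del. generalize (Rmin_l (Rmin d1 um) (Rabs (c 0) / (2 * K))) (Rmin_r (Rmin d1 um) (Rabs (c 0) / (2 * K)))
      (Rmin_l d1 um) (Rmin_r d1 um). intros.
    assert (0 < Rabs (c 0) / (2 * K)) by (apply Rdiv_lt_0_compat; lra).
    assert (0 < Rmin (Rmin d1 um) (Rabs (c 0) / (2 * K))) by (apply Rmin_pos; [apply Rmin_pos|]; lra).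
    split. lra. split. lra. split. lra.
    assert (HH : K * Rmin (Rmin d1 um) (Rabs (c 0) / (2 * K)) <= K * (Rabs (c 0) / (2 * K))) by (apply Rmult_le_compat_l; lra).
    replace (K * (Rabs (c 0) / (2 * K))) with (Rabs (c 0) / 2) in HH by (field; lra). lra. }
  assert (Hcz : forall z, 0 <= z < del -> Rabs (c z - c 0) <= Rabs (c 0) / 2).
  { intros z Hz. eapply Rle_trans. apply Hb. rewrite Rminus_0_r, Rabs_pos_eq; lra.
    rewrite Rminus_0_r. rewrite (Rabs_pos_eq z) by lra. fold K. assert (K * z <= K * del) by (apply Rmult_le_compat_l; lra). lra. }
  assert (Hneg : c 0 < 0).
  { destruct (Rlt_le_dec (c 0) 0) as [|Hp]; auto. exfalso.
    assert (Hp' : 0 < c 0) by lra.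
    set (u := del / 2). destruct (Hrep u) as [z [Hz Hgz]]. unfold u; lra.
    assert (Rabs (c z - c 0) <= c 0 / 2) by (rewrite <- (Rabs_pos_eq (c 0)) at 2 by lra; apply Hcz; unfold u in Hz; lra).
    generalize (Rle_abs (c z - c 0)) (Rle_abs (- (c z - c 0))). rewrite Rabs_Ropp. intros.
    assert (0 < u ^ N) by (apply pow_lt; unfold u; lra).
    assert (0 < c z * u ^ N) by (apply Rmult_lt_0_compat; lra).
    assert (gfun f s um u < 0) by (apply Hg; unfold u; lra). lra. }
  exists del, (- c 0 / 2), (- 3 * c 0 / 2). split. lra. split. lra. split. lra.
  intros u Hu. destruct (Hrep u) as [z [Hz Hgz]]. lra.
  assert (Hcz' : Rabs (c z - c 0) <= - c 0 / 2) by (rewrite <- (Rabs_left (c 0)) by lra; apply Hcz; lra).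
  generalize (Rle_abs (c z - c 0)) (Rle_abs (- (c z - c 0))). rewrite Rabs_Ropp. intros.
  assert (0 < u ^ N) by (apply pow_lt; lra).
  rewrite Hgz. split.
  - assert (3 * c 0 / 2 <= c z) by lra. nra.
  - assert (c z <= c 0 / 2) by lra. nra.
Qed.

Lemma is_derive_sub_lin (F : R -> R) c x d : is_derive F x d -> is_derive (fun t => F t - c * t) x (d - c).
Proof. intros HF. apply (is_derive_minus F (fun t => c * t)); auto. auto_derive; auto; ring. Qed.

Lemma is_derive_lin_sub (F : R -> R) c x d : is_derive F x d -> is_derive (fun t => c * t - F t) x (c - d).
Proof. intros HF. apply (is_derive_minus (fun t => c * t) F); auto. auto_derive; auto; ring. Qed.

Lemma plus_asym m mu f um s U (N : nat) del A B : Hyp m mu f um s -> is_profile f mu m s um U ->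
  (1 <= N)%nat -> 0 < del -> 0 < A -> 0 < B ->
  (forall u, 0 < u < del -> - B * u ^ N <= gfun f s um u <= - A * u ^ N) ->
  equiv_pinfty (fun xi => rpow (Rabs (Derive U xi)) (1 / (INR N + 1 - m))) (fun xi => Rabs (U xi - 0)) /\
  equiv_pinfty (fun xi => Rabs (U xi - 0)) (fun xi => rpow (Rabs xi) (- (1 / (INR N - m)))).
Proof.
  intros H HP HN Hdel HA HB Hgb. pose proof H as (Hm0 & Hm1 & Hmu & Hf & Hum & HRH & Hg).
  destruct (profile_facts m mu f um s U Hm0 Hm1 Hmu Hf Hum HP) as (_ & Hb & HD & _).
  destruct HP as (HM & Hlm & Hlp & _).
  assert (Hmm : 0 < mu * m) by (apply Rmult_lt_0_compat; auto).
  assert (HN1 : 1 <= INR N) by (apply (le_INR 1 N) in HN; simpl in HN; lra).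
  set (p := INR N + 1 - m). set (q := INR N - m).
  assert (Hp : 0 < p) by (unfold p; lra). assert (Hq : 0 < q) by (unfold q; lra).
  set (A' := A / (mu * m)). set (B' := B / (mu * m)).
  assert (HA' : 0 < A') by (unfold A'; apply Rdiv_lt_0_compat; auto).
  assert (HB' : 0 < B') by (unfold B'; apply Rdiv_lt_0_compat; auto).
  destruct (lim_pinf_elim U 0 Hlp del Hdel) as [X0 HX0].
  assert (HUd : forall x, X0 < x -> 0 < U x < del).
  { intros x Hx. specialize (HX0 x Hx). rewrite Rminus_0_r in HX0. apply Rabs_def2 in HX0. split. apply Hb. lra. }
  assert (Hdu : forall x, Derive U x = hfun f mu m s um (U x)) by (intros; apply is_derive_unique; apply HD).
  assert (Hrp : forall u, 0 < u -> u ^ N * rpow u (1 - m) = rpow u p).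
  { intros u Hu. rewrite <- rpow_INR by auto. rewrite <- rpow_plus by auto. unfold p. f_equal. ring. }
  assert (Hhb : forall x, X0 < x ->
     A' * rpow (U x) p <= - hfun f mu m s um (U x) <= B' * rpow (U x) p).
  { intros x Hx. destruct (HUd x Hx) as [Hu1 Hu2].
    specialize (Hgb (U x) (conj Hu1 Hu2)).
    assert (Hr : 0 < rpow (U x) (1 - m)) by (apply rpow_gt0; auto).
    rewrite <- Hrp by auto. unfold hfun, A', B'.
    split.
    - replace (A / (mu * m) * (U x ^ N * rpow (U x) (1 - m))) with ((A * U x ^ N) * rpow (U x) (1 - m) / (mu * m)) by (field; lra).
      replace (- (gfun f s um (U x) * rpow (U x) (1 - m) / (mu * m))) with ((- gfun f s um (U x)) * rpow (U x) (1 - m) / (mu * m)) by (field; lra).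
      unfold Rdiv. apply Rmult_le_compat_r. left; apply Rinv_0_lt_compat; auto.
      apply Rmult_le_compat_r. lra. lra.
    - replace (B / (mu * m) * (U x ^ N * rpow (U x) (1 - m))) with ((B * U x ^ N) * rpow (U x) (1 - m) / (mu * m)) by (field; lra).
      replace (- (gfun f s um (U x) * rpow (U x) (1 - m) / (mu * m))) with ((- gfun f s um (U x)) * rpow (U x) (1 - m) / (mu * m)) by (field; lra).
      unfold Rdiv. apply Rmult_le_compat_r. left; apply Rinv_0_lt_compat; auto.
      apply Rmult_le_compat_r. lra. lra. }
  assert (Hhn : forall x, hfun f mu m s um (U x) < 0) by (intros; apply (h_neg m mu f um s); auto).
  split.
  - apply (equiv_pinfty_intro _ _ X0 (rpow A' (1 / p)) (rpow B' (1 / p))).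
    apply rpow_gt0; auto. apply rpow_gt0; auto.
    intros x Hx. destruct (HUd x Hx) as [Hu1 Hu2]. rewrite Rminus_0_r, Rabs_pos_eq by lra.
    rewrite Hdu, Rabs_left by auto.
    specialize (Hhb x Hx).
    assert (Hpp : forall c, 0 < c -> rpow (c * rpow (U x) p) (1 / p) = rpow c (1 / p) * U x).
    { intros c Hc. rewrite rpow_mult_base; auto. rewrite rpow_rpow; auto. replace (p * (1 / p)) with 1 by (field; lra).
      rewrite rpow_one; auto. apply rpow_gt0; auto. }
    assert (0 < rpow (U x) p) by (apply rpow_gt0; auto).
    split. lra. split.
    + rewrite <- Hpp by auto. apply rpow_le_base. split. left; apply Rmult_lt_0_compat; auto. lra.
      left; apply Rdiv_lt_0_compat; lra.
    + rewrite <- Hpp by auto. apply rpow_le_base. split. generalize (Hhn x); lra. lra.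
      left; apply Rdiv_lt_0_compat; lra.
  - set (W := fun x => rpow (U x) (- q)).
    assert (HW : forall x, X0 < x -> exists d, is_derive W x d /\ q * A' <= d <= q * B').
    { intros x Hx. exists (- q * rpow (U x) (- q - 1) * hfun f mu m s um (U x)). split.
      - apply is_derive_rpow_comp; auto. apply Hb.
      - destruct (HUd x Hx) as [Hu1 Hu2]. specialize (Hhb x Hx).
        assert (E : rpow (U x) (- q - 1) * rpow (U x) p = 1).
        { rewrite <- rpow_plus by auto. replace (- q - 1 + p) with 0 by (unfold p, q; ring). apply rpow_zero; auto. }
        assert (Hr : 0 < rpow (U x) (- q - 1)) by (apply rpow_gt0; auto).
        replace (- q * rpow (U x) (- q - 1) * hfun f mu m s um (U x)) with (q * rpow (U x) (- q - 1) * (- hfun f mu m s um (U x))) by ring.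
        split.
        + replace (q * A') with (q * rpow (U x) (- q - 1) * (A' * rpow (U x) p)) by (replace (q * rpow (U x) (- q - 1) * (A' * rpow (U x) p)) with (q * A' * (rpow (U x) (- q - 1) * rpow (U x) p)) by ring; rewrite E; ring).
          apply Rmult_le_compat_l. left; apply Rmult_lt_0_compat; auto. lra.
        + replace (q * B') with (q * rpow (U x) (- q - 1) * (B' * rpow (U x) p)) by (replace (q * rpow (U x) (- q - 1) * (B' * rpow (U x) p)) with (q * B' * (rpow (U x) (- q - 1) * rpow (U x) p)) by ring; rewrite E; ring).
          apply Rmult_le_compat_l. left; apply Rmult_lt_0_compat; auto. lra. }
    set (X1 := Rmax X0 0 + 1).
    assert (HX1 : X0 < X1 /\ 1 <= X1) by (unfold X1; generalize (Rmax_l X0 0) (Rmax_r X0 0); lra).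
    assert (HWpos : forall x, 0 < W x) by (intros; apply rpow_gt0; apply Hb).
    assert (HW' : forall x, X0 < x -> is_derive W x (Derive W x) /\ q * A' <= Derive W x <= q * B').
    { intros x Hx. destruct (HW x Hx) as [d [Hd1 Hd2]]. rewrite (is_derive_unique _ _ _ Hd1). auto. }
    assert (Hlow : forall x, X1 <= x -> W X1 + q * A' * (x - X1) <= W x).
    { intros x Hx.
      assert ((fun t => W t - q * A' * t) X1 <= (fun t => W t - q * A' * t) x).
      { apply (incr_on (fun t => W t - q * A' * t) (fun t => Derive W t - q * A')); auto.
        - intros t Ht. apply is_derive_sub_lin. apply HW'. lra.
        - intros t Ht. destruct (HW' t ltac:(lra)). lra. }
      simpl in H0. lra. }
    assert (Hup : forall x, X1 <= x -> W x <= W X1 + q * B' * (x - X1)).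
    { intros x Hx.
      assert ((fun t => q * B' * t - W t) X1 <= (fun t => q * B' * t - W t) x).
      { apply (incr_on (fun t => q * B' * t - W t) (fun t => q * B' - Derive W t)); auto.
        - intros t Ht. apply is_derive_lin_sub. apply HW'. lra.
        - intros t Ht. destruct (HW' t ltac:(lra)). lra. }
      simpl in H0. lra. }
    set (c1 := q * A' / 2). set (c2 := W X1 + q * B').
    assert (Hc1 : 0 < c1) by (unfold c1; apply Rdiv_lt_0_compat; [apply Rmult_lt_0_compat|]; lra).
    assert (Hc2 : 0 < c2) by (unfold c2; generalize (HWpos X1); assert (0 < q * B') by (apply Rmult_lt_0_compat; auto); lra).
    apply (equiv_pinfty_intro _ _ (2 * X1) (rpow c2 (- (1 / q))) (rpow c1 (- (1 / q)))).
    apply rpow_gt0; auto. apply rpow_gt0; auto.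
    intros x Hx. rewrite Rminus_0_r, (Rabs_pos_eq (U x)) by (left; apply Hb).
    rewrite (Rabs_pos_eq x) by lra.
    assert (HUW : U x = rpow (W x) (- (1 / q))).
    { unfold W. rewrite rpow_rpow by apply Hb. replace (- q * - (1 / q)) with 1 by (field; lra). rewrite rpow_one; auto. apply Hb. }
    assert (HWl : c1 * x <= W x).
    { specialize (Hlow x ltac:(lra)). generalize (HWpos X1). unfold c1.
      assert (0 < q * A') by (apply Rmult_lt_0_compat; auto). nra. }
    assert (HWu : W x <= c2 * x).
    { specialize (Hup x ltac:(lra)). generalize (HWpos X1). unfold c2.
      assert (0 < q * B') by (apply Rmult_lt_0_compat; auto). nra. }
    split. apply rpow_ge0. split.
    + rewrite HUW, <- rpow_mult_base by lra. apply rpow_le_base_neg; [split; [first [apply HWpos | apply Rmult_lt_0_compat; lra] | auto] | left; apply Rdiv_lt_0_compat; lra].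
    + rewrite HUW, <- rpow_mult_base by lra. apply rpow_le_base_neg; [split; [first [apply HWpos | apply Rmult_lt_0_compat; lra] | auto] | left; apply Rdiv_lt_0_compat; lra].
Qed.

Lemma h_expand m mu f um s : Hyp m mu f um s ->
  exists del M, 0 < del /\ 0 <= M /\ forall u, um - del < u < um ->
    Rabs (hfun f mu m s um u + rpow um (1 - m) / (mu * m) * (Derive f um - s) * (um - u)) <= M * (um - u) ^ 2.
Proof.
  intros H. pose proof H as (Hm0 & Hm1 & Hmu & Hf & Hum & HRH & Hg).
  assert (Hmm : 0 < mu * m) by (apply Rmult_lt_0_compat; auto).
  set (g' := fun v => - s + Derive f v).
  destruct (deriv_loc_bound g' um _ (g_deriv2 f s um Hf)) as [d2 [Hd2 Hb2]].
  destruct (deriv_loc_bound (fun v => rpow v (1 - m)) um _ (is_derive_rpow um (1 - m) Hum)) as [d3 [Hd3 Hb3]].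
  set (K2 := Rabs (Derive (Derive f) um) + 1).
  set (K3 := Rabs ((1 - m) * rpow um (1 - m - 1)) + 1).
  assert (HK2 : 0 <= K2) by (unfold K2; generalize (Rabs_pos (Derive (Derive f) um)); lra).
  assert (HK3 : 0 <= K3) by (unfold K3; generalize (Rabs_pos ((1 - m) * rpow um (1 - m - 1))); lra).
  exists (Rmin (Rmin d2 d3) um), ((K2 * (1 + um) + Rabs (g' um) * K3) / (mu * m)).
  split. apply Rmin_pos; [apply Rmin_pos|]; auto.
  split. apply Rmult_le_pos. generalize (Rabs_pos (g' um)). nra. left; apply Rinv_0_lt_compat; auto.
  intros u Hu.
  generalize (Rmin_l (Rmin d2 d3) um) (Rmin_r (Rmin d2 d3) um) (Rmin_l d2 d3) (Rmin_r d2 d3). intros R1 R2 R3 R4.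
  set (w := um - u).
  assert (Hw : 0 < w /\ w < d2 /\ w < d3 /\ w < um) by (unfold w; lra).
  destruct (MVT_gen (gfun f s um) u um g') as [z [Hz Hmvt]].
  { intros x Hx. apply g_deriv; auto. }
  { intros x Hx. eapply cont_of_derive. apply g_deriv; auto. }
  rewrite Rmin_left in Hz by lra. rewrite Rmax_right in Hz by lra.
  rewrite g_zero_r in Hmvt.
  assert (Hg1 : Rabs (gfun f s um u + g' um * w) <= K2 * w ^ 2).
  { replace (gfun f s um u + g' um * w) with ((g' um - g' z) * w) by (unfold w; lra).
    rewrite Rabs_mult, (Rabs_pos_eq w) by lra. rewrite <- Rabs_Ropp. replace (- (g' um - g' z)) with (g' z - g' um) by ring.
    assert (HH0 : Rabs (g' z - g' um) <= K2 * Rabs (z - um)) by (apply Hb2; rewrite Rabs_left1; unfold w in Hw; lra).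
    rewrite (Rabs_left1 (z - um)) in HH0 by lra.
    assert (- (z - um) <= w) by (unfold w; lra).
    assert (Rabs (g' z - g' um) <= K2 * w) by (eapply Rle_trans; [apply HH0|]; apply Rmult_le_compat_l; lra).
    replace (K2 * w ^ 2) with (K2 * w * w) by ring. apply Rmult_le_compat_r; lra. }
  assert (Hp1 : Rabs (rpow u (1 - m) - rpow um (1 - m)) <= K3 * w).
  { replace w with (Rabs (u - um)) by (rewrite Rabs_left1; unfold w; lra).
    apply Hb3. rewrite Rabs_left1; unfold w in Hw; lra. }
  assert (Hp2 : Rabs (rpow u (1 - m)) <= 1 + um).
  { rewrite Rabs_pos_eq by apply rpow_ge0. eapply Rle_trans. apply rpow_bound; lra. lra. }
  unfold hfun.
  replace (gfun f s um u * rpow u (1 - m) / (mu * m) + rpow um (1 - m) / (mu * m) * (Derive f um - s) * w)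
    with (((gfun f s um u + g' um * w) * rpow u (1 - m) - g' um * w * (rpow u (1 - m) - rpow um (1 - m))) / (mu * m))
    by (unfold g', w; field; lra).
  unfold Rdiv. rewrite Rabs_mult, (Rabs_pos_eq (/ (mu * m))) by (left; apply Rinv_0_lt_compat; auto).
  rewrite Rmult_comm.
  replace ((K2 * (1 + um) + Rabs (g' um) * K3) * / (mu * m) * w ^ 2) with (/ (mu * m) * ((K2 * (1 + um) + Rabs (g' um) * K3) * w ^ 2)) by ring.
  apply Rmult_le_compat_l. left; apply Rinv_0_lt_compat; auto.
  eapply Rle_trans. apply Rabs_triang. rewrite Rabs_Ropp, !Rabs_mult, (Rabs_pos_eq w) by lra.
  assert (Rabs (gfun f s um u + g' um * w) * Rabs (rpow u (1 - m)) <= K2 * w ^ 2 * (1 + um))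
    by (apply Rmult_le_compat; auto; apply Rabs_pos).
  assert (Rabs (g' um) * w * Rabs (rpow u (1 - m) - rpow um (1 - m)) <= Rabs (g' um) * w * (K3 * w)).
  { apply Rmult_le_compat_l; auto. apply Rmult_le_pos; [apply Rabs_pos|lra]. }
  replace ((K2 * (1 + um) + Rabs (g' um) * K3) * w ^ 2) with (K2 * w ^ 2 * (1 + um) + Rabs (g' um) * w * (K3 * w)) by ring.
  lra.
Qed.

Lemma is_derive_plus_cexp (F : R -> R) c k x d : is_derive F x d ->
  is_derive (fun t => F t + c * exp (k * t)) x (d + c * k * exp (k * x)).
Proof. intros HF. apply (is_derive_plus F (fun t => c * exp (k * t))); auto. auto_derive; auto; ring. Qed.

Lemma is_derive_ln_comp (w : R -> R) x d : is_derive w x d -> 0 < w x ->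
  is_derive (fun t => ln (w t)) x (d / w x).
Proof.
  intros Hw Hp. replace (d / w x) with (scal d (/ w x)).
  apply (is_derive_comp ln w). auto_derive; auto; field; lra. auto.
  unfold scal; simpl; unfold mult; simpl; field; lra.
Qed.

Lemma minus_asym m mu f um s U : Hyp m mu f um s -> is_profile f mu m s um U -> s < Derive f um ->
  equiv_minfty (fun xi => Rabs (Derive U xi)) (fun xi => Rabs (U xi - um)) /\
  equiv_minfty (fun xi => Rabs (U xi - um))
    (fun xi => exp (- (rpow um (1 - m) / (mu * m) * (Derive f um - s)) * Rabs xi)).
Proof.
  intros H HP Hs. pose proof H as (Hm0 & Hm1 & Hmu & Hf & Hum & HRH & Hg).
  destruct (profile_facts m mu f um s U Hm0 Hm1 Hmu Hf Hum HP) as (_ & Hb & HD & _).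
  destruct HP as (HM & Hlm & Hlp & _).
  assert (Hmm : 0 < mu * m) by (apply Rmult_lt_0_compat; auto).
  set (lam := rpow um (1 - m) / (mu * m) * (Derive f um - s)).
  assert (Hlam : 0 < lam).
  { unfold lam. apply Rmult_lt_0_compat. apply Rdiv_lt_0_compat; auto. apply rpow_gt0; auto. lra. }
  destruct (h_expand m mu f um s H) as [del [M [Hdel [HM0 Hexp]]]]. fold lam in Hexp.
  set (eps0 := Rmin del (lam / (2 * (M + 1)))).
  assert (Heps0 : 0 < eps0 /\ eps0 <= del /\ (M + 1) * eps0 <= lam / 2).
  { assert (E1 : eps0 <= del) by apply Rmin_l. assert (E2 : eps0 <= lam / (2 * (M + 1))) by apply Rmin_r.
    assert (0 < lam / (2 * (M + 1))) by (apply Rdiv_lt_0_compat; lra).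
    split. apply Rmin_pos; lra. split. lra.
    assert (HH : (M + 1) * eps0 <= (M + 1) * (lam / (2 * (M + 1)))) by (apply Rmult_le_compat_l; lra).
    replace ((M + 1) * (lam / (2 * (M + 1)))) with (lam / 2) in HH by (field; lra). exact HH. }
  destruct (lim_minf_elim U um Hlm eps0 (proj1 Heps0)) as [X HX].
  set (X1 := Rmin X 0 - 1).
  assert (HX1 : X1 < X /\ X1 < 0) by (unfold X1; generalize (Rmin_l X 0) (Rmin_r X 0); lra).
  set (w := fun t => um - U t).
  assert (Hw : forall t, t <= X1 -> 0 < w t < eps0).
  { intros t Ht. specialize (HX t ltac:(lra)). apply Rabs_def2 in HX. unfold w. split. generalize (Hb t); lra. lra. }
  set (e := fun t => - (hfun f mu m s um (U t) + lam * w t)).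
  assert (He : forall t, t <= X1 -> Rabs (e t) <= M * w t ^ 2 /\ Rabs (e t) <= lam / 2 * w t).
  { intros t Ht. destruct (Hw t Ht) as [Hw1 Hw2].
    assert (Hb1 : Rabs (e t) <= M * w t ^ 2).
    { unfold e. rewrite Rabs_Ropp. unfold w in *. apply Hexp. lra. }
    split; auto. eapply Rle_trans. apply Hb1.
    assert (M * w t <= lam / 2) by nra.
    simpl. rewrite Rmult_1_r. nra. }
  assert (Hdu : forall t, Derive U t = hfun f mu m s um (U t)) by (intros; apply is_derive_unique; apply HD).
  assert (Hhe : forall t, hfun f mu m s um (U t) = - lam * w t - e t) by (intros; unfold e; ring).
  assert (Hebd : forall t, t <= X1 -> - (lam / 2 * w t) <= e t <= lam / 2 * w t).
  { intros t Ht. destruct (He t Ht) as [_ H2].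
    generalize (Rle_abs (e t)) (Rle_abs (- e t)). rewrite Rabs_Ropp. lra. }
  split.
  - apply (equiv_minfty_intro _ _ X1 (lam / 2) (3 * lam / 2)). lra. lra.
    intros x Hx. rewrite Hdu, Hhe.
    assert (Hwx : U x - um = - w x) by (unfold w; ring). rewrite Hwx, Rabs_Ropp.
    destruct (Hw x ltac:(lra)) as [Hw1 Hw2]. specialize (Hebd x ltac:(lra)).
    assert (0 < lam * w x) by (apply Rmult_lt_0_compat; lra).
    rewrite (Rabs_pos_eq (w x)) by lra. rewrite Rabs_left by lra. split. lra. lra.
  - assert (Hwd : forall t, is_derive w t (- hfun f mu m s um (U t))) by (intros; apply is_derive_cminus; apply HD).
    assert (Hwp : forall t, 0 < w t) by (intros; unfold w; generalize (Hb t); lra).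
    set (k := lam / 2).
    set (D0 := w X1 * exp (- k * X1)).
    assert (HD0 : 0 < D0) by (unfold D0; apply Rmult_lt_0_compat; [apply Hwp|apply exp_pos]).
    assert (Hcrude : forall x, x <= X1 -> w x <= D0 * exp (k * x)).
    { intros x Hx.
      assert (HF : (fun t => w t * exp (- k * t)) x <= (fun t => w t * exp (- k * t)) X1).
      { apply (incr_on (fun t => w t * exp (- k * t)) (fun t => - hfun f mu m s um (U t) * exp (- k * t) + w t * (- k * exp (- k * t)))); auto.
        - intros t Ht. apply (is_derive_mult w (fun t => exp (- k * t))). apply Hwd.
          auto_derive; auto. ring. intros; unfold mult; simpl; ring.
        - intros t Ht. rewrite Hhe. specialize (Hebd t ltac:(lra)).
          assert (0 < exp (- k * t)) by apply exp_pos. unfold k in *.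
          assert (0 <= (- (- lam * w t - e t) - lam / 2 * w t)) by lra. nra. }
      simpl in HF. unfold D0.
      assert (E : exp (- k * x) * exp (k * x) = 1) by (rewrite <- exp_plus; replace (- k * x + k * x) with 0 by ring; apply exp_0).
      assert (0 < exp (k * x)) by apply exp_pos.
      replace (w x) with (w x * exp (- k * x) * exp (k * x)) by (rewrite Rmult_assoc, E; ring).
      apply Rmult_le_compat_r; lra. }
    set (Fl := fun t => ln (w t) - lam * t).
    assert (HFl : forall t, is_derive Fl t (e t / w t)).
    { intros t. unfold Fl. replace (e t / w t) with (- hfun f mu m s um (U t) / w t - lam).
      apply is_derive_sub_lin. apply is_derive_ln_comp. apply Hwd. apply Hwp.
      rewrite Hhe. field. generalize (Hwp t); lra. }
    set (D := M * D0).
    assert (HDp : 0 <= D) by (unfold D; apply Rmult_le_pos; lra).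
    assert (Hew : forall t, t <= X1 -> - (D * exp (k * t)) <= e t / w t <= D * exp (k * t)).
    { intros t Ht. destruct (He t Ht) as [H1 _]. specialize (Hcrude t Ht). specialize (Hwp t).
      assert (Rabs (e t / w t) <= M * w t).
      { unfold Rdiv. rewrite Rabs_mult, Rabs_inv, (Rabs_pos_eq (w t)) by lra.
        apply (Rmult_le_reg_r (w t)); auto. rewrite Rmult_assoc, Rinv_l, Rmult_1_r by lra.
        simpl in H1. rewrite Rmult_1_r in H1. lra. }
      assert (M * w t <= D * exp (k * t)) by (unfold D; rewrite Rmult_assoc; apply Rmult_le_compat_l; lra).
      generalize (Rle_abs (e t / w t)) (Rle_abs (- (e t / w t))). rewrite Rabs_Ropp. lra. }
    assert (Hk : 0 < k) by (unfold k; lra).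
    set (c := D / k).
    assert (Hup : forall x, x <= X1 -> Fl x <= Fl X1 + c * exp (k * X1)).
    { intros x Hx.
      assert (HG : (fun t => Fl t + c * exp (k * t)) x <= (fun t => Fl t + c * exp (k * t)) X1).
      { apply (incr_on (fun t => Fl t + c * exp (k * t)) (fun t => e t / w t + c * k * exp (k * t))); auto.
        - intros t Ht. apply is_derive_plus_cexp. apply HFl.
        - intros t Ht. specialize (Hew t ltac:(lra)). unfold c. replace (D / k * k) with D by (field; lra). lra. }
      simpl in HG. assert (0 <= c * exp (k * x)) by (unfold c; apply Rmult_le_pos; [apply Rle_mult_inv_pos; lra|left; apply exp_pos]).
      lra. }
    assert (Hlow : forall x, x <= X1 -> Fl X1 - c * exp (k * X1) <= Fl x).
    { intros x Hx.
      assert (HG : (fun t => Fl t + - c * exp (k * t)) X1 <= (fun t => Fl t + - c * exp (k * t)) x).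
      { apply (decr_on (fun t => Fl t + - c * exp (k * t)) (fun t => e t / w t + - c * k * exp (k * t))); auto.
        - intros t Ht. apply is_derive_plus_cexp. apply HFl.
        - intros t Ht. specialize (Hew t ltac:(lra)). unfold c. replace (- (D / k) * k) with (- D) by (field; lra). lra. }
      simpl in HG. assert (0 <= c * exp (k * x)) by (unfold c; apply Rmult_le_pos; [apply Rle_mult_inv_pos; lra|left; apply exp_pos]).
      lra. }
    apply (equiv_minfty_intro _ _ X1 (exp (Fl X1 - c * exp (k * X1))) (exp (Fl X1 + c * exp (k * X1)))).
    apply exp_pos. apply exp_pos.
    intros x Hx.
    assert (Hwx : U x - um = - w x) by (unfold w; ring). rewrite Hwx, Rabs_Ropp, (Rabs_pos_eq (w x)) by (left; apply Hwp).
    rewrite Rabs_left by lra. replace (- lam * - x) with (lam * x) by ring.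
    assert (Ew : w x = exp (Fl x) * exp (lam * x)).
    { rewrite <- exp_plus. unfold Fl. replace (ln (w x) - lam * x + lam * x) with (ln (w x)) by ring. rewrite exp_ln; auto. }
    rewrite Ew. assert (0 < exp (lam * x)) by apply exp_pos.
    split. left; auto. split.
    + apply Rmult_le_compat_r. lra. apply exp_mono. apply Hlow; lra.
    + apply Rmult_le_compat_r. lra. apply exp_mono. apply Hup; lra.
Qed.

Lemma sum_taylor f (k : nat) x : (1 <= k)%nat ->
  (forall j : nat, (2 <= j <= k)%nat -> Derive_n f j 0 = 0) ->
  sum_f_R0 (fun j => x ^ j / INR (Factorial.fact j) * Derive_n f j 0) k = f 0 + x * Derive f 0.
Proof.
  induction k as [|k IH]; intros Hk Hz.
  - lia.
  - destruct k as [|k'].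
    + simpl. change (fun x => f x) with f. field.
    + rewrite tech5. rewrite IH by (try lia; intros j Hj; apply Hz; lia).
      rewrite (Hz (S (S k'))) by lia. ring.
Qed.

Theorem theorem2p1 (m mu : R) (f : R -> R) (um s : R) :
  0 < m -> m < 1 -> 0 < mu -> smooth f -> 0 < um ->
  (* (1) necessary condition *)
  ((exists U, is_profile f mu m s um U) ->
     s = (f 0 - f um) / (0 - um) /\
     (forall u, 0 < u < um -> gfun f s um u < 0)) /\
  (* (2) sufficient condition: existence and uniqueness up to shift *)
  ((s = (f 0 - f um) / (0 - um) ->
    (forall u, 0 < u < um -> gfun f s um u < 0) ->
     (exists U, is_profile f mu m s um U) /\
     (forall U1 U2, is_profile f mu m s um U1 -> is_profile f mu m s um U2 ->
        exists c, forall xi, U2 xi = U1 (xi + c)))) /\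
  (* (3) decay properties *)
  (forall U, s = (f 0 - f um) / (0 - um) ->
     (forall u, 0 < u < um -> gfun f s um u < 0) ->
     is_profile f mu m s um U ->
     let lambda := rpow um (1 - m) / (mu * m) * (Derive f um - s) in
     (* non-degenerate case *)
     (Derive f 0 < s < Derive f um ->
        0 < lambda /\
        equiv_pinfty (fun xi => rpow (Rabs (Derive U xi)) (1 / (2 - m)))
                     (fun xi => Rabs (U xi - 0)) /\
        equiv_pinfty (fun xi => Rabs (U xi - 0))
                     (fun xi => rpow (Rabs xi) (- (1 / (1 - m)))) /\
        equiv_minfty (fun xi => Rabs (Derive U xi)) (fun xi => Rabs (U xi - um)) /\
        equiv_minfty (fun xi => Rabs (U xi - um)) (fun xi => exp (- lambda * Rabs xi))) /\
     (* degenerate case *)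
     (forall k : nat, (1 <= k)%nat ->
        Derive f 0 = s -> s < Derive f um ->
        (forall j : nat, (2 <= j <= k)%nat -> Derive_n f j 0 = 0) ->
        Derive_n f (S k) 0 <> 0 ->
        0 < lambda /\
        equiv_pinfty (fun xi => rpow (Rabs (Derive U xi)) (1 / (INR k + 2 - m)))
                     (fun xi => Rabs (U xi - 0)) /\
        equiv_pinfty (fun xi => Rabs (U xi - 0))
                     (fun xi => rpow (Rabs xi) (- (1 / (INR k + 1 - m)))) /\
        equiv_minfty (fun xi => Rabs (Derive U xi)) (fun xi => Rabs (U xi - um)) /\
        equiv_minfty (fun xi => Rabs (U xi - um)) (fun xi => exp (- lambda * Rabs xi)))).
Proof.
  intros Hm0 Hm1 Hmu Hf Hum. split; [|split].
  - intros [U HP]. destruct (profile_facts m mu f um s U Hm0 Hm1 Hmu Hf Hum HP) as (HRH & _ & _ & Hg). auto.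
  - intros HRH Hg.
    assert (H : Hyp m mu f um s) by (repeat split; auto).
    split.
    + destruct (Uinv_exists m mu f um s H) as [U HU]. exists U. apply Uinv_profile; auto.
    + intros U1 U2 H1 H2. apply (profile_unique m mu f um s); auto.
  - intros U HRH Hg HP lambda.
    assert (H : Hyp m mu f um s) by (repeat split; auto).
    assert (Hmm : 0 < mu * m) by (apply Rmult_lt_0_compat; auto).
    assert (Hlam : forall (Hs : s < Derive f um), 0 < lambda).
    { intros Hs. unfold lambda. apply Rmult_lt_0_compat. apply Rdiv_lt_0_compat; auto. apply rpow_gt0; auto. lra. }
    split.
    + intros [Hs0 Hs1].
      destruct (minus_asym m mu f um s U H HP Hs1) as [Hm1' Hm2'].
      destruct (g_bound_from_rep m mu f um s 1 (fun z => - s + Derive f z) (Derive (Derive f) 0) H) as [del [A [B (Hdel & HA & HB & Hgb)]]].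
      * lia.
      * apply g_deriv2; auto.
      * lra.
      * intros u Hu. destruct (MVT_gen (gfun f s um) 0 u (fun z => - s + Derive f z)) as [z [Hz Hmvt]].
        { intros x Hx. apply g_deriv; auto. }
        { intros x Hx. eapply cont_of_derive. apply g_deriv; auto. }
        rewrite Rmin_left in Hz by lra. rewrite Rmax_right in Hz by lra.
        exists z. split; auto. rewrite (g_zero_l f s um HRH Hum) in Hmvt. simpl. lra.
      * destruct (plus_asym m mu f um s U 1 del A B H HP) as [Hp1 Hp2]; [lia|auto|auto|auto|auto|].
        replace (INR 1 + 1 - m) with (2 - m) in Hp1 by (simpl; ring).
        replace (INR 1 - m) with (1 - m) in Hp2 by (simpl; ring).
        repeat split; auto.
    + intros k Hk Hf0 Hs1 Hz Hnz.
      destruct (minus_asym m mu f um s U H HP Hs1) as [Hm1' Hm2'].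
      assert (Hfact : 0 < INR (Factorial.fact (S k))) by (apply lt_0_INR; apply Factorial.lt_O_fact).
      destruct (g_bound_from_rep m mu f um s (S k) (fun z => Derive_n f (S k) z / INR (Factorial.fact (S k)))
                  (Derive (Derive_n f (S k)) 0 / INR (Factorial.fact (S k))) H) as [del [A [B (Hdel & HA & HB & Hgb)]]].
      * lia.
      * unfold Rdiv. apply (is_derive_mulc (Derive_n f (S k))). apply Derive_correct. exact (Hf (S (S k)) 0).
      * intros E. apply Hnz. apply (Rmult_eq_compat_r (INR (Factorial.fact (S k)))) in E.
        unfold Rdiv in E. rewrite Rmult_assoc, Rinv_l, Rmult_1_r, Rmult_0_l in E by lra. auto.
      * intros u Hu.
        destruct (Taylor_Lagrange f k 0 u) as [z [Hz2 Ht]].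
        { lra. }
        { intros t Ht j Hj. apply Hf. }
        exists z. split. lra.
        rewrite sum_taylor in Ht by auto.
        replace (u - 0) with u in Ht by ring.
        unfold gfun. rewrite Ht. rewrite Hf0.
        assert (E : s * um = f um - f 0) by (rewrite HRH; field; lra).
        replace (- s * (u - um)) with (- (s * u) + s * um) by ring. rewrite E. field. lra.
      * destruct (plus_asym m mu f um s U (S k) del A B H HP) as [Hp1 Hp2]; [lia|auto|auto|auto|auto|].
        replace (INR (S k) + 1 - m) with (INR k + 2 - m) in Hp1 by (rewrite S_INR; ring).
        replace (INR (S k) - m) with (INR k + 1 - m) in Hp2 by (rewrite S_INR; ring).
        repeat split; auto.
Qed.
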